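(* Let $X,Y$ be jointly Gaussian centred random variables with common variance $\sigma^2$ and correlation $c$, and let $r>0$. Then as $c\to-1$ (with $\sigma$ fixed), $$\operatorname{E}\big((X^+Y^+)^r\big)\simeq K_r\,\sigma^{-2(1+r)}\big(\det\operatorname{Var}(X,Y)\big)^{(2r+1)/2},\qquad K_r:=\frac1{2\pi}\int_0^\infty\!\!\int_0^\infty x^ry^r\exp\Big(-\frac{(x+y)^2}{2}\Big)dx\,dy<\infty,$$ and $K_1=\frac1{6\pi}$. Moreover, as $c\to-1$, $\operatorname{E}(X^+Y^-)\simeq\frac{\sigma^2}{2}$.
   Context: $z^+=\max(0,z)$, $z^-=-\min(0,z)$. *)

(* Defs.v *)
From Stdlib Require Import Reals Lra.
Open Scope R_scope.

Definition posp (z : R) : R := Rmax 0 z.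
Definition negp (z : R) : R := - Rmin 0 z.

(* real power x^r for x >= 0, with the convention 0^r = 0 (r > 0) *)
Definition rpow (x r : R) : R := if Rle_dec x 0 then 0 else Rpower x r.

Definition has_integral_0inf (f : R -> R) (l : R) : Prop :=
  (forall b, 0 <= b -> inhabited (Riemann_integrable f 0 b)) /\
  (forall eps, eps > 0 -> exists B, forall b (pr : Riemann_integrable f 0 b),
      b >= B -> Rabs (RiemannInt pr - l) < eps).

Definition has_integral_R (f : R -> R) (l : R) : Prop :=
  exists l1 l2, has_integral_0inf f l1 /\ has_integral_0inf (fun x => f (- x)) l2
                /\ l = l1 + l2.

Definition has_integral2_R (F : R -> R -> R) (l : R) : Prop :=
  exists g : R -> R, (forall x, has_integral_R (fun y => F x y) (g x)) /\ has_integral_R g l.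

Definition has_integral2_0inf (F : R -> R -> R) (l : R) : Prop :=
  exists g : R -> R, (forall x, 0 <= x -> has_integral_0inf (fun y => F x y) (g x))
                     /\ has_integral_0inf g l.

(* determinant of Var(X,Y) for common variance sigma^2 and correlation c *)
Definition detVar (sigma c : R) : R := sigma ^ 4 - (c * sigma ^ 2) ^ 2.

(* density of the centred Gaussian vector (X,Y) with Var X = Var Y = sigma^2,
   Cov(X,Y) = c sigma^2 (nondegenerate for -1 < c < 1) *)
Definition gauss_density (sigma c x y : R) : R :=
  / (2 * PI * sqrt (detVar sigma c)) *
  exp (- (sigma ^ 2 * x ^ 2 - 2 * c * sigma ^ 2 * x * y + sigma ^ 2 * y ^ 2)
         / (2 * detVar sigma c)).

Definition K_integrand (r x y : R) : R :=
  / (2 * PI) * (rpow x r * rpow y r * exp (- (x + y) ^ 2 / 2)).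

Definition corr_domain (c : R) : Prop := -1 < c < 1.

(* Main.v *)
Require Import Defs.
From Stdlib Require Import Reals Lra Psatz ClassicalEpsilon.
From Coquelicot Require Import Coquelicot.
Open Scope R_scope.


Definition IG (f : R -> R) (l : R) : Prop :=
  (forall b, 0 <= b -> ex_RInt f 0 b) /\ is_lim (fun b => RInt f 0 b) p_infty l.

Lemma lim_pinf_eps (F : R -> R) (l : R) :
  is_lim F p_infty l <-> forall eps, 0 < eps -> exists M, forall x, M < x -> Rabs (F x - l) < eps.
Proof.
  split.
  - intros H eps Heps. apply is_lim_spec in H. destruct (H (mkposreal eps Heps)) as [M HM].
    exists M. intros x Hx. apply (HM x Hx).
  - intros H. apply is_lim_spec. intros eps. destruct (H eps (cond_pos eps)) as [M HM].
    exists M. intros x Hx. apply HM; auto.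
Qed.

Lemma lim_pinf_scale (F : R -> R) (l a : R) :
  0 < a -> is_lim F p_infty l -> is_lim (fun b => F (a * b)) p_infty l.
Proof.
  intros Ha H. rewrite lim_pinf_eps in *. intros eps Heps.
  destruct (H eps Heps) as [M HM]. exists (M / a). intros x Hx. apply HM.
  apply Rmult_lt_compat_l with (r := a) in Hx; auto. field_simplify in Hx; lra.
Qed.

Lemma lim_pinf_shift (F : R -> R) (l m : R) :
  is_lim F p_infty l -> is_lim (fun b => F (b + m)) p_infty l.
Proof.
  intros H. rewrite lim_pinf_eps in *. intros eps Heps.
  destruct (H eps Heps) as [M HM]. exists (M - m). intros x Hx. apply HM. lra.
Qed.

Lemma IG_ex f l b : IG f l -> 0 <= b -> ex_RInt f 0 b.
Proof. intros [H _] Hb. auto. Qed.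

Lemma IG_ext f g l : (forall x, 0 < x -> f x = g x) -> IG f l -> IG g l.
Proof.
  intros Hfg [H1 H2]. split.
  - intros b Hb. apply ex_RInt_ext with f; [|apply H1; auto].
    intros x [h1 h2]. rewrite Rmin_left in h1; [|auto]. apply Hfg; lra.
  - apply is_lim_ext_loc with (fun b => RInt f 0 b); [|auto].
    exists 0. intros b Hb. apply RInt_ext. intros x [h1 h2].
    rewrite Rmin_left in h1; try lra. apply Hfg; lra.
Qed.

Lemma IG_unique f l1 l2 : IG f l1 -> IG f l2 -> l1 = l2.
Proof.
  intros [_ H1] [_ H2]. apply is_lim_unique in H1. apply is_lim_unique in H2.
  rewrite H1 in H2. injection H2; auto.
Qed.

Lemma IG_plus f g l1 l2 : IG f l1 -> IG g l2 -> IG (fun x => f x + g x) (l1 + l2).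
Proof.
  intros [A1 B1] [A2 B2]. split.
  - intros b Hb. apply (ex_RInt_plus f g); auto.
  - apply is_lim_ext_loc with (fun b => RInt f 0 b + RInt g 0 b).
    + exists 0. intros b Hb. symmetry. apply (RInt_plus f g); auto with real.
    + apply is_lim_plus'; auto.
Qed.

Lemma IG_scal f k l : IG f l -> IG (fun x => k * f x) (k * l).
Proof.
  intros [A B]. split.
  - intros b Hb. apply (ex_RInt_scal f); auto.
  - apply is_lim_ext_loc with (fun b => k * RInt f 0 b).
    + exists 0. intros b Hb. symmetry. apply (RInt_scal f); auto with real.
    + apply (is_lim_scal_l _ k p_infty l). auto.
Qed.

Lemma IG_minus f g l1 l2 : IG f l1 -> IG g l2 -> IG (fun x => f x - g x) (l1 - l2).
Proof.
  intros H1 H2. apply IG_ext with (fun x => f x + (-1) * g x).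
  - intros; ring.
  - replace (l1 - l2) with (l1 + (-1) * l2) by ring. apply IG_plus; auto. apply IG_scal; auto.
Qed.

Lemma IG_le f g l1 l2 : IG f l1 -> IG g l2 -> (forall x, 0 < x -> f x <= g x) -> l1 <= l2.
Proof.
  intros [A1 B1] [A2 B2] H.
  assert (Hr : Rbar_le l1 l2).
  { apply (is_lim_le_loc (fun b => RInt f 0 b) (fun b => RInt g 0 b) p_infty); auto.
    exists 0. intros b Hb. apply RInt_le.
    - lra.
    - apply A1; lra.
    - apply A2; lra.
    - intros x [h1 h2]; apply H; lra. }
  simpl in Hr. auto.
Qed.

Lemma IG_abs_le f g l lg : IG f l -> IG g lg -> (forall x, 0 < x -> Rabs (f x) <= g x) -> Rabs l <= lg.
Proof.
  intros H1 H2 H. apply Rabs_le. split.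
  - assert (H3 : IG (fun x => -1 * f x) (-1 * l)) by (apply IG_scal; auto).
    assert (-1 * l <= lg). { apply IG_le with (fun x => -1 * f x) g; auto.
      intros x Hx. specialize (H x Hx). apply Rabs_le_between in H. lra. }
    lra.
  - apply IG_le with f g; auto. intros x Hx. specialize (H x Hx). apply Rabs_le_between in H. lra.
Qed.

Lemma IG_cmp (f g : R -> R) lg : (forall b, 0 <= b -> ex_RInt f 0 b) -> (forall x, 0 < x -> Rabs (f x) <= g x) ->
  IG g lg -> exists l, IG f l.
Proof.
  intros Hf Hfg [Ag Bg].
  assert (Hc : exists y : R, filterlim (fun b => RInt f 0 b) (Rbar_locally' p_infty) (locally y)).
  { apply (proj1 (filterlim_locally_cauchy (U := R_CompleteSpace) (F := Rbar_locally' p_infty) (fun b => RInt f 0 b))).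
    intros eps. rewrite lim_pinf_eps in Bg. destruct (Bg (eps/2)) as [M HM].
    { destruct eps; simpl; lra. }
    exists (fun b => Rmax 0 M < b). split.
    { exists (Rmax 0 M). auto. }
    assert (key : forall u v, Rmax 0 M < u -> u <= v -> Rabs (RInt f 0 v - RInt f 0 u) < eps).
    { intros u v Hu Huv.
      assert (H0u : 0 <= u) by (generalize (Rmax_l 0 M); lra).
      assert (HMu : M < u) by (generalize (Rmax_r 0 M); lra).
      assert (E1 : ex_RInt f u v) by (apply (ex_RInt_Chasles_2 f 0); [lra| apply Hf; lra]).
      assert (E2 : ex_RInt g u v) by (apply (ex_RInt_Chasles_2 g 0); [lra| apply Ag; lra]).
      assert (Eq1 : RInt f 0 v - RInt f 0 u = RInt f u v).
      { rewrite <- (RInt_Chasles f 0 u v); auto. unfold plus; simpl. ring. }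
      assert (Eq2 : RInt g 0 v - RInt g 0 u = RInt g u v).
      { rewrite <- (RInt_Chasles g 0 u v); auto. unfold plus; simpl. ring. }
      assert (Hle : Rabs (RInt f u v) <= RInt g u v).
      { apply Rabs_le. split.
        - assert (RInt (fun x => -1 * g x) u v <= RInt f u v).
          { apply RInt_le; auto. apply (ex_RInt_scal g); auto.
            intros x [h1 h2]. assert (0 < x) by lra. specialize (Hfg x H).
            apply Rabs_le_between in Hfg. lra. }
          assert (Hs : RInt (fun x => -1 * g x) u v = -1 * RInt g u v) by (apply (RInt_scal g u v (-1)); auto).
          rewrite Hs in H. lra.
        - apply RInt_le; auto. intros x [h1 h2]. assert (0 < x) by lra. specialize (Hfg x H).
          apply Rabs_le_between in Hfg. lra. }
      rewrite Eq1. eapply Rle_lt_trans; [apply Hle|]. rewrite <- Eq2.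
      assert (A1 := HM u HMu). assert (A2 := HM v ltac:(lra)).
      apply Rabs_lt_between in A1. apply Rabs_lt_between in A2. lra. }
    intros u v Hu Hv. change (Rabs (RInt f 0 v - RInt f 0 u) < eps).
    destruct (Rle_dec u v) as [Huv|Huv].
    - apply key; auto.
    - rewrite Rabs_minus_sym. apply key; auto; lra. }
  destruct Hc as [y Hy]. exists y. split; auto.
Qed.

Lemma IG_exp : IG (fun x => exp (- x)) 1.
Proof.
  assert (HR : forall b, is_RInt (fun x => exp (- x)) 0 b (1 - exp (- b))).
  { intros b. replace (1 - exp (- b)) with (minus (- exp (- b)) (- exp (- 0))).
    2:{ unfold minus, plus, opp; simpl. rewrite Ropp_0, exp_0. ring. }
    apply (is_RInt_derive (fun x => - exp (- x))).
    - intros x _. auto_derive; auto. ring.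
    - intros x _. apply (ex_derive_continuous (fun x => exp (- x))). auto_derive; auto. }
  split.
  - intros b _. eexists; apply HR.
  - apply is_lim_ext with (fun b => 1 - exp (- b)).
    { intros b. symmetry. apply is_RInt_unique. apply HR. }
    rewrite lim_pinf_eps. intros eps Heps. exists (- ln eps). intros x Hx.
    replace (1 - exp (- x) - 1) with (- exp (- x)) by ring. rewrite Rabs_Ropp.
    rewrite Rabs_right; [|left; apply exp_pos].
    rewrite <- (exp_ln eps Heps). apply exp_increasing. lra.
Qed.

Lemma IG_bound (f : R -> R) M : (forall y, 0 <= y -> continuous f y) ->
  (forall y, 0 < y -> Rabs (f y) <= M * exp (- y)) -> exists l, IG f l.
Proof.
  intros Hc Hb. apply IG_cmp with (fun y => M * exp (- y)) (M * 1); auto.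
  - intros b Hb0. apply (ex_RInt_continuous (V := R_CompleteNormedModule)). intros z [h1 h2]. rewrite Rmin_left in h1; auto.
  - apply IG_scal. apply IG_exp.
Qed.

Lemma IG_scale (f : R -> R) l a : 0 < a -> IG f l -> IG (fun u => f (a * u)) (l / a).
Proof.
  intros Ha [A B].
  assert (HE : forall b, 0 <= b -> ex_RInt (fun u => f (a * u)) 0 b /\
                RInt (fun u => f (a * u)) 0 b = / a * RInt f 0 (a * b)).
  { intros b Hb.
    assert (E0 : ex_RInt f (a * 0 + 0) (a * b + 0)).
    { replace (a * 0 + 0) with 0 by ring. replace (a * b + 0) with (a * b) by ring.
      apply A. nra. }
    assert (I1 := is_RInt_comp_lin f a 0 0 b _ (RInt_correct _ _ _ E0)).
    assert (I2 := is_RInt_scal _ 0 b (/ a) _ I1).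
    assert (Ev : scal (/ a) (RInt f (a * 0 + 0) (a * b + 0)) = / a * RInt f 0 (a * b)).
    { replace (a * 0 + 0) with 0 by ring. replace (a * b + 0) with (a * b) by ring. reflexivity. }
    unfold scal in I2 at 1; simpl in I2; unfold mult in I2 at 1; simpl in I2.
    replace (a * 0 + 0) with 0 in I2 by ring. replace (a * b + 0) with (a * b) in I2 by ring.
    assert (I3 : is_RInt (fun u => f (a * u)) 0 b (/ a * RInt f 0 (a * b))).
    { eapply is_RInt_ext; [|apply I2]. intros x _. unfold scal; simpl. unfold mult; simpl.
      replace (a * x + 0) with (a * x) by ring. field. lra. }
    split.
    - eexists; apply I3.
    - apply is_RInt_unique; auto. }
  split.
  - intros b Hb. apply HE; auto.
  - apply is_lim_ext_loc with (fun b => / a * RInt f 0 (a * b)).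
    { exists 0. intros b Hb. symmetry. apply HE; lra. }
    replace (l / a) with (/ a * l) by (field; lra).
    apply (is_lim_scal_l _ (/ a) p_infty l). apply lim_pinf_scale; auto.
Qed.


Ltac toR := match goal with |- @eq _ ?a ?b => change (@eq R a b) end.

Lemma RInt_scal_R (f : R -> R) a b k : ex_RInt f a b -> RInt (fun x => k * f x) a b = k * RInt f a b.
Proof. intros H. exact (RInt_scal f a b k H). Qed.

Lemma RInt_plus_R (f g : R -> R) a b : ex_RInt f a b -> ex_RInt g a b -> RInt (fun x => f x + g x) a b = RInt f a b + RInt g a b.
Proof. intros H1 H2. exact (RInt_plus f g a b H1 H2). Qed.

Lemma RInt_minus_R (f g : R -> R) a b : ex_RInt f a b -> ex_RInt g a b -> RInt (fun x => f x - g x) a b = RInt f a b - RInt g a b.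
Proof. intros H1 H2. exact (RInt_minus f g a b H1 H2). Qed.

Lemma RInt_Chasles_R (f : R -> R) a b c : ex_RInt f a b -> ex_RInt f b c -> RInt f a b + RInt f b c = RInt f a c.
Proof. intros H1 H2. exact (RInt_Chasles f a b c H1 H2). Qed.

Lemma RInt_comp_lin_R (f : R -> R) u v a b : ex_RInt f (u * a + v) (u * b + v) ->
  RInt (fun y => u * f (u * y + v)) a b = RInt f (u * a + v) (u * b + v).
Proof. intros H. exact (RInt_comp_lin f u v a b H). Qed.

Lemma ex_RInt_cont (f : R -> R) a b : (forall z, Rmin a b <= z <= Rmax a b -> continuous f z) -> ex_RInt f a b.
Proof. intros H. apply (ex_RInt_continuous (V := R_CompleteNormedModule)); auto. Qed.

Lemma is_derive_eq (f : R -> R) (x l1 l2 : R) : is_derive f x l1 -> l1 = l2 -> is_derive f x l2.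
Proof. intros H <-. exact H. Qed.

Ltac norm_exp t := repeat match goal with |- context [exp ?a] =>
  assert_fails (constr_eq a t); replace a with t by (unfold Rdiv; simpl; ring) end.

Lemma cont_mult (f g : R -> R) x : continuous f x -> continuous g x -> continuous (fun y => f y * g y) x.
Proof. intros H1 H2. apply (continuous_mult (K := R_AbsRing) f g x H1 H2). Qed.

Lemma cont_der (f : R -> R) x : ex_derive f x -> continuous f x.
Proof. intros H. apply (ex_derive_continuous f x H). Qed.

Lemma cont_ext (f g : R -> R) x : (forall y, f y = g y) -> continuous f x -> continuous g x.
Proof. intros H1 H2. apply (continuous_ext f g x H1 H2). Qed.

Lemma cont_comp (f g : R -> R) x : continuous f x -> continuous g (f x) -> continuous (fun y => g (f y)) x.
Proof. intros H1 H2. apply (continuous_comp f g x H1 H2). Qed.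


Lemma exp_diff_aux a b : b <= a -> 0 <= exp a - exp b <= (a - b) * exp a.
Proof.
  intros Hab. split.
  - destruct (Req_dec a b) as [->|Hne]; [lra|]. assert (exp b < exp a) by (apply exp_increasing; lra). lra.
  - assert (H := exp_ineq1_le (b - a)).
    assert (E : exp b = exp a * exp (b - a)) by (rewrite <- exp_plus; f_equal; ring).
    rewrite E. assert (0 < exp a) by apply exp_pos. nra.
Qed.

Lemma exp_diff_bound a b : Rabs (exp a - exp b) <= Rabs (a - b) * exp (Rmax a b).
Proof.
  destruct (Rle_dec b a) as [H|H].
  - rewrite Rmax_left; auto. destruct (exp_diff_aux a b H).
    rewrite Rabs_right by lra. rewrite Rabs_right by lra. auto.
  - rewrite Rmax_right by lra. destruct (exp_diff_aux b a) as [A B]; [lra|].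
    rewrite Rabs_minus_sym. rewrite (Rabs_minus_sym a b).
    rewrite Rabs_right by lra. rewrite Rabs_right by lra. auto.
Qed.

Lemma rpow_nonneg x r : 0 <= rpow x r.
Proof. unfold rpow. destruct (Rle_dec x 0); [lra|]. unfold Rpower. left; apply exp_pos. Qed.

Lemma rpow_pos x r : 0 < x -> rpow x r = Rpower x r.
Proof. intros H. unfold rpow. destruct (Rle_dec x 0); [lra|auto]. Qed.

Lemma rpow_nonpos x r : x <= 0 -> rpow x r = 0.
Proof. intros H. unfold rpow. destruct (Rle_dec x 0); [auto|lra]. Qed.

Lemma ln_lt_id x : 0 < x -> ln x < x.
Proof.
  intros Hx. assert (H := exp_ineq1_le (ln x)). rewrite exp_ln in H; auto. lra.
Qed.

Lemma rpow_le_exp x r : 0 < r -> rpow x r <= exp (r * x).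
Proof.
  intros Hr. unfold rpow. destruct (Rle_dec x 0). { left; apply exp_pos. }
  unfold Rpower. assert (ln x < x) by (apply ln_lt_id; lra).
  left. apply exp_increasing. nra.
Qed.

Lemma quad_exp p k x : 0 < k -> exp (p * x) * exp (- (k * x ^ 2) / 2) <= exp ((p + 1) ^ 2 / (2 * k)) * exp (- x).
Proof.
  intros Hk. rewrite <- !exp_plus.
  assert (p * x + - (k * x ^ 2) / 2 <= (p + 1) ^ 2 / (2 * k) + - x).
  { assert (E : (p + 1) ^ 2 / (2 * k) + - x - (p * x + - (k * x ^ 2) / 2) = (k * x - (p + 1)) ^ 2 / (2 * k)) by (field; lra).
    assert (0 <= (k * x - (p + 1)) ^ 2 / (2 * k)).
    { apply Rmult_le_pos. apply pow2_ge_0. left. apply Rinv_0_lt_compat. lra. }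
    lra. }
  destruct H; [left; apply exp_increasing; auto| rewrite H; lra].
Qed.

Lemma rpow_cont r x : 0 < r -> continuous (fun y => rpow y r) x.
Proof.
  intros Hr. destruct (Rtotal_order x 0) as [Hx|[Hx|Hx]].
  - apply continuous_ext_loc with (fun _ => 0).
    + exists (mkposreal (- x) ltac:(lra)). intros y Hy. simpl in Hy. unfold ball in Hy; simpl in Hy.
      unfold AbsRing_ball, abs, minus, plus, opp in Hy; simpl in Hy.
      rewrite rpow_nonpos; auto. apply Rabs_lt_between in Hy. lra.
    + apply continuous_const.
  - subst. apply continuity_pt_filterlim. unfold continuity_pt, continue_in, limit1_in, limit_in.
    intros eps Heps.
    exists (Rpower eps (/ r)). split. { unfold Rpower; apply exp_pos. }
    intros y [_ Hy]. simpl in *. unfold R_dist in *. rewrite (rpow_nonpos 0 r) by lra. rewrite Rminus_0_r in *.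
    unfold rpow. destruct (Rle_dec y 0). { rewrite Rabs_R0. lra. }
     rewrite Rabs_right by (unfold Rpower; left; apply exp_pos).
    rewrite Rabs_right in Hy by lra. unfold Rpower in *.
    rewrite <- (exp_ln eps) by auto. apply exp_increasing.
    assert (ln y < / r * ln eps).
    { rewrite <- (ln_exp (/ r * ln eps)). apply ln_increasing; lra. }
    apply Rmult_lt_compat_l with (r := r) in H; auto. rewrite <- Rmult_assoc, Rinv_r in H; lra.
  - apply continuous_ext_loc with (fun y => exp (r * ln y)).
    + exists (mkposreal x Hx). intros y Hy. simpl in Hy. unfold ball in Hy; simpl in Hy.
      unfold AbsRing_ball, abs, minus, plus, opp in Hy; simpl in Hy. apply Rabs_lt_between in Hy.
      rewrite rpow_pos by lra. reflexivity.
    + apply cont_der. auto_derive. lra.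
Qed.


Definition gs (s : R) : R := exp (- (s * s)).
Definition GG (t : R) : R := RInt gs 0 t.
Definition uu (t x : R) : R := exp (- (t * t * (1 + x * x))) / (1 + x * x).
Definition AA (t : R) : R := RInt (uu t) 0 1.

Lemma one_plus_sq_pos x : 0 < 1 + x * x.
Proof. nra. Qed.

Lemma gs_cont x : continuous gs x.
Proof. apply cont_der. unfold gs. auto_derive. auto. Qed.

Lemma gs_ex a b : ex_RInt gs a b.
Proof. apply (ex_RInt_continuous (V := R_CompleteNormedModule)). intros; apply gs_cont. Qed.

Lemma uu_cont t x : continuous (uu t) x.
Proof. apply cont_der. unfold uu. auto_derive. generalize (one_plus_sq_pos x); lra. Qed.

Lemma uu_ex t a b : ex_RInt (uu t) a b.
Proof. apply (ex_RInt_continuous (V := R_CompleteNormedModule)). intros; apply uu_cont. Qed.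

Lemma uu_der (u v : R) : is_derive (fun z => uu z v) u ((-2 * u) * exp (- (u * u * (1 + v * v)))).
Proof.
  unfold uu. auto_derive. generalize (one_plus_sq_pos v); lra.
  field. generalize (one_plus_sq_pos v); lra.
Qed.

Lemma AA_der (t : R) : is_derive AA t (-2 * exp (- (t * t)) * GG t).
Proof.
  assert (D := is_derive_RInt_param uu 0 1 t).
  assert (E : forall u v, Derive (fun z => uu z v) u = (-2 * u) * exp (- (u * u * (1 + v * v)))).
  { intros; apply is_derive_unique; apply uu_der. }
  assert (D' : is_derive AA t (RInt (fun x => Derive (fun u => uu u x) t) 0 1)).
  { apply D.
    - exists (mkposreal 1 Rlt_0_1). intros y _ x _. eexists; apply uu_der.
    - intros x _. apply continuity_2d_pt_ext with (fun u v => (-2 * u) * exp (- (u * u * (1 + v * v)))).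
      { intros; symmetry; apply E. }
      apply continuity_2d_pt_mult.
      + apply continuity_2d_pt_mult. apply continuity_2d_pt_const. apply continuity_2d_pt_id1.
      + apply (continuity_1d_2d_pt_comp exp (fun u v => - (u * u * (1 + v * v)))).
        * apply derivable_continuous_pt. apply derivable_exp.
        * apply continuity_2d_pt_opp. apply continuity_2d_pt_mult.
          apply continuity_2d_pt_mult; apply continuity_2d_pt_id1.
          apply continuity_2d_pt_plus. apply continuity_2d_pt_const.
          apply continuity_2d_pt_mult; apply continuity_2d_pt_id2.
    - exists (mkposreal 1 Rlt_0_1). intros y _. apply uu_ex. }
  replace (-2 * exp (- (t * t)) * GG t) with (RInt (fun x => Derive (fun u => uu u x) t) 0 1); auto.
  rewrite (RInt_ext _ (fun x => -2 * exp (- (t * t)) * (t * gs (t * x + 0)))).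
  2:{ intros x _. rewrite E. unfold gs. replace (- (t * t * (1 + x * x))) with (- (t * t) + - ((t * x + 0) * (t * x + 0))) by ring.
      rewrite exp_plus. toR. ring. }
  assert (Ex : ex_RInt (fun x => t * gs (t * x + 0)) 0 1).
  { apply (ex_RInt_continuous (V := R_CompleteNormedModule)). intros z _. apply cont_der. unfold gs. auto_derive. auto. }
  rewrite (RInt_scal_R (fun x => t * gs (t * x + 0)) 0 1 (-2 * exp (- (t * t))) Ex).
  rewrite (RInt_comp_lin_R gs t 0 0 1 (gs_ex _ _)). replace (t * 0 + 0) with 0 by ring. replace (t * 1 + 0) with t by ring. reflexivity.
Qed.

Lemma GG_der (t : R) : is_derive GG t (gs t).
Proof.
  apply (is_derive_RInt gs GG 0 t).
  - exists (mkposreal 1 Rlt_0_1). intros y _. unfold GG. apply (RInt_correct (V := R_CompleteNormedModule)). apply gs_ex.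
  - apply gs_cont.
Qed.

Definition hh (t : R) : R := AA t + GG t * GG t.

Lemma hh_der (t : R) : is_derive hh t 0.
Proof.
  unfold hh.
  assert (H1 := AA_der t). assert (H2 := GG_der t).
  assert (H3 := is_derive_mult (K := R_AbsRing) GG GG t _ _ H2 H2 (fun a b => Rmult_comm a b)).
  assert (H4 := is_derive_plus _ _ t _ _ H1 H3).
  eapply is_derive_eq. exact H4.
  unfold plus, mult; simpl. unfold gs. toR. ring.
Qed.

Lemma hh_const (t : R) : hh t = PI / 4.
Proof.
  assert (I1 := is_RInt_derive (V := R_CompleteNormedModule) hh (fun _ => 0) 0 t
                  (fun x _ => hh_der x) (fun x _ => continuous_const _ x)).
  assert (I2 := is_RInt_const (V := R_CompleteNormedModule) 0 t 0).
  apply is_RInt_unique in I1. apply is_RInt_unique in I2. rewrite I1 in I2.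
  unfold minus, plus, opp, scal in I2; simpl in I2. unfold mult in I2; simpl in I2.
  assert (E : hh t = hh 0) by lra. rewrite E.
  unfold hh, GG. rewrite RInt_point. unfold zero; simpl.
  unfold AA.
  assert (I3 := is_RInt_derive (V := R_CompleteNormedModule) atan (fun x => / (1 + x²)) 0 1
                 (fun x _ => is_derive_atan x)).
  assert (C : forall x, continuous (fun x => / (1 + x²)) x).
  { intros x. apply cont_der. auto_derive. unfold Rsqr. generalize (one_plus_sq_pos x). lra. }
  specialize (I3 (fun x _ => C x)). apply is_RInt_unique in I3.
  rewrite (RInt_ext (uu 0) (fun x => / (1 + x²))).
  2:{ intros x _. unfold uu, Rsqr. replace (- (0 * 0 * (1 + x * x))) with 0 by ring. rewrite exp_0. toR. field.
      generalize (one_plus_sq_pos x); lra. }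
  rewrite I3. unfold minus, plus, opp; simpl. rewrite atan_1, atan_0. toR. ring.
Qed.

Lemma AA_bound (t : R) : 0 <= AA t <= exp (- (t * t)).
Proof.
  unfold AA. split.
  - apply RInt_ge_0; [lra| apply uu_ex|]. intros x _. unfold uu. left. apply Rdiv_lt_0_compat.
    apply exp_pos. apply one_plus_sq_pos.
  - assert (H : RInt (uu t) 0 1 <= RInt (fun _ => exp (- (t * t))) 0 1).
    { apply RInt_le; [lra|apply uu_ex| apply ex_RInt_const|]. intros x [h1 h2].
      unfold uu. assert (P := one_plus_sq_pos x).
      assert (exp (- (t * t * (1 + x * x))) <= exp (- (t * t))).
      { destruct (Rle_lt_or_eq_dec (- (t * t * (1 + x * x))) (- (t * t))).
        - assert (0 <= t * t * (x * x)) by (apply Rmult_le_pos; nra). lra.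
        - left; apply exp_increasing; auto.
        - rewrite e; lra. }
      unfold Rdiv. apply Rle_trans with (exp (- (t * t * (1 + x * x))) * 1).
      + apply Rmult_le_compat_l. left; apply exp_pos.
        rewrite <- Rinv_1. apply Rinv_le_contravar. lra. nra.
      + lra. }
    rewrite RInt_const in H. unfold scal in H; simpl in H. unfold mult in H; simpl in H. lra.
Qed.

Lemma GG_nonneg t : 0 <= t -> 0 <= GG t.
Proof. intros Ht. unfold GG. apply RInt_ge_0; auto. apply gs_ex. intros; left; apply exp_pos. Qed.

Lemma GG_lim : is_lim GG p_infty (sqrt PI / 2).
Proof.
  assert (L1 : is_lim (fun t => GG t * GG t) p_infty (PI / 4)).
  { rewrite lim_pinf_eps. intros eps Heps. exists (Rmax 1 (- ln eps)). intros x Hx.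
    assert (E : GG x * GG x = PI / 4 - AA x) by (generalize (hh_const x); unfold hh; lra).
    rewrite E. destruct (AA_bound x) as [B1 B2].
    replace (PI / 4 - AA x - PI / 4) with (- AA x) by ring. rewrite Rabs_Ropp, Rabs_right by lra.
    eapply Rle_lt_trans; [apply B2|]. rewrite <- (exp_ln eps Heps). apply exp_increasing.
    generalize (Rmax_l 1 (- ln eps)) (Rmax_r 1 (- ln eps)); intros; nra. }
  apply is_lim_ext_loc with (fun t => sqrt (GG t * GG t)).
  { exists 0. intros t Ht. apply sqrt_square. apply GG_nonneg. lra. }
  replace (sqrt PI / 2) with (sqrt (PI / 4)).
  2:{ rewrite sqrt_div; [|left; apply PI_RGT_0|lra]. f_equal. replace 4 with (2 * 2) by ring.
      apply sqrt_square. lra. }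
  unfold is_lim. eapply filterlim_comp; [exact L1|]. apply continuous_sqrt.
Qed.

Lemma IG_gs : IG gs (sqrt PI / 2).
Proof. split. intros; apply gs_ex. exact GG_lim. Qed.

Definition phi (s : R) : R := exp (- s ^ 2 / 2).

Lemma phi_cont x : continuous phi x.
Proof. apply cont_der. unfold phi. auto_derive. auto. Qed.

Lemma phi_ex a b : ex_RInt phi a b.
Proof. apply ex_RInt_cont. intros; apply phi_cont. Qed.

Lemma IG_phi : IG phi (sqrt (2 * PI) / 2).
Proof.
  assert (Hs : 0 < sqrt 2) by (apply sqrt_lt_R0; lra).
  assert (H := IG_scale gs _ (/ sqrt 2) ltac:(apply Rinv_0_lt_compat; auto) IG_gs).
  eapply IG_ext; [|replace (sqrt (2 * PI) / 2) with (sqrt PI / 2 / / sqrt 2); [exact H|]].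
  - intros x _. unfold gs, phi. f_equal.
    assert (E : sqrt 2 * sqrt 2 = 2) by (apply sqrt_sqrt; lra).
    field_simplify; [|lra]. replace (sqrt 2 ^ 2) with 2 by (simpl; lra). reflexivity.
  - rewrite sqrt_mult; [|lra|left; apply PI_RGT_0]. field. lra.
Qed.


Lemma exp_neg_lim : is_lim (fun b => exp (- b)) p_infty 0.
Proof.
  rewrite lim_pinf_eps. intros eps Heps. exists (- ln eps). intros x Hx.
  rewrite Rminus_0_r, Rabs_right by (left; apply exp_pos).
  rewrite <- (exp_ln eps Heps). apply exp_increasing. lra.
Qed.

Lemma phi_even s : phi (- s) = phi s.
Proof. unfold phi. replace ((- s) ^ 2) with (s ^ 2) by ring. reflexivity. Qed.

Lemma phi_pos s : 0 < phi s.
Proof. apply exp_pos. Qed.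

Lemma phi_le_exp s : 2 <= s -> phi s <= exp (- s).
Proof.
  intros H. unfold phi. destruct (Req_dec (- s ^ 2 / 2) (- s)) as [E|E].
  - rewrite E; lra.
  - left. apply exp_increasing. simpl. nra.
Qed.

Lemma phi_lim : is_lim phi p_infty 0.
Proof.
  apply (is_lim_le_le_loc (fun _ => 0) (fun b => exp (- b))).
  - exists 2. intros y Hy. split. left; apply phi_pos. apply phi_le_exp. lra.
  - apply is_lim_const.
  - apply exp_neg_lim.
Qed.

Lemma phi_der (s : R) : is_derive phi s (- s * phi s).
Proof. unfold phi. auto_derive. auto. norm_exp (- s ^ 2 / 2). field. Qed.

Definition Gp (t : R) : R := RInt phi 0 t.

Lemma Gp_odd t : Gp (- t) = - Gp t.
Proof.
  unfold Gp. assert (H := RInt_comp_lin_R phi (-1) 0 0 t (phi_ex _ _)).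
  replace (-1 * 0 + 0) with 0 in H by ring. replace (-1 * t + 0) with (- t) in H by ring.
  rewrite <- H. rewrite (RInt_ext _ (fun y => -1 * phi y)).
  2:{ intros x _. replace (-1 * x + 0) with (- x) by ring. rewrite phi_even. reflexivity. }
  rewrite RInt_scal_R by apply phi_ex. ring.
Qed.

Lemma RInt_phi a b : RInt phi a b = Gp b - Gp a.
Proof.
  unfold Gp. rewrite <- (RInt_Chasles_R phi 0 a b) by apply phi_ex. lra.
Qed.

Lemma Gp_lim : is_lim Gp p_infty (sqrt (2 * PI) / 2).
Proof. destruct IG_phi as [_ H]. exact H. Qed.

Lemma IG_S (m : R) : IG (fun v => v * phi (v - m) - v * phi (v + m)) (m * sqrt (2 * PI)).
Proof.
  set (P := fun v => - phi (v - m) + phi (v + m)).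
  set (dP := fun v => (v - m) * phi (v - m) - (v + m) * phi (v + m)).
  assert (HdP : forall v, is_derive P v (dP v)).
  { intros v. unfold P, dP, phi. auto_derive. auto. norm_exp (- (v - m) ^ 2 / 2). norm_exp (- (v + m) ^ 2 / 2). field. }
  assert (CdP : forall v, continuous dP v).
  { intros v. apply cont_der. unfold dP, phi. auto_derive. auto. }
  assert (ExdP : forall a b, ex_RInt dP a b) by (intros; apply ex_RInt_cont; auto).
  assert (RdP : forall b, RInt dP 0 b = P b - P 0).
  { intros b. apply is_RInt_unique. apply (is_RInt_derive (V := R_CompleteNormedModule) P dP); auto. }
  assert (P0 : P 0 = 0).
  { unfold P. replace (0 - m) with (- m) by ring. replace (0 + m) with m by ring. rewrite phi_even. ring. }
  assert (Exm : forall c a b, ex_RInt (fun v => phi (v + c)) a b).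
  { intros; apply ex_RInt_cont. intros; apply cont_der. unfold phi. auto_derive. auto. }
  assert (Shift : forall c b, RInt (fun v => phi (v + c)) 0 b = Gp (b + c) - Gp c).
  { intros c b. assert (H := RInt_comp_lin_R phi 1 c 0 b (phi_ex _ _)).
    rewrite (RInt_ext _ (fun y => 1 * phi (1 * y + c))). rewrite H.
    replace (1 * 0 + c) with c by ring. replace (1 * b + c) with (b + c) by ring. apply RInt_phi.
    intros x _. replace (1 * x + c) with (x + c) by ring. toR. ring. }
  assert (Ef : forall b, RInt (fun v => v * phi (v - m) - v * phi (v + m)) 0 b
                 = P b + m * (Gp (b - m) + Gp (b + m))).
  { intros b.
    rewrite (RInt_ext _ (fun v => dP v + m * (phi (v + - m) + phi (v + m)))).
    2:{ intros x _. unfold dP. replace (x + - m) with (x - m) by ring. toR. ring. }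
    rewrite RInt_plus_R; auto. 2:{ apply (ex_RInt_scal (V := R_CompleteNormedModule)). apply (ex_RInt_plus (V := R_CompleteNormedModule)); auto. }
    rewrite RInt_scal_R. 2:{ apply (ex_RInt_plus (V := R_CompleteNormedModule)); auto. }
    rewrite RInt_plus_R; auto. rewrite RdP, P0, !Shift.
    replace (b + - m) with (b - m) by ring. rewrite Gp_odd. toR. ring. }
  split.
  - intros b _. apply ex_RInt_cont. intros; apply cont_der. unfold phi. auto_derive; auto.
  - apply is_lim_ext with (fun b => P b + m * (Gp (b - m) + Gp (b + m))).
    { intros b; symmetry; apply Ef. }
    replace (m * sqrt (2 * PI)) with ((- 0 + 0) + m * (sqrt (2 * PI) / 2 + sqrt (2 * PI) / 2)) by field.
    apply is_lim_plus'.
    + unfold P. apply is_lim_plus'.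
      * apply (is_lim_ext (fun b => -1 * phi (b + - m))). { intros; replace (y + - m) with (y - m) by ring; ring. }
        replace (- 0) with (-1 * 0) by ring. apply (is_lim_scal_l _ (-1) p_infty 0).
        apply lim_pinf_shift. apply phi_lim.
      * apply lim_pinf_shift. apply phi_lim.
    + apply (is_lim_scal_l _ m p_infty (sqrt (2 * PI) / 2 + sqrt (2 * PI) / 2)).
      apply is_lim_plus'.
      * apply (is_lim_ext (fun b => Gp (b + - m))). { intros; replace (y + - m) with (y - m) by ring; reflexivity. }
        apply lim_pinf_shift. apply Gp_lim.
      * apply lim_pinf_shift. apply Gp_lim.
Qed.

Lemma IG_mom2 : IG (fun u => u ^ 2 * phi u) (sqrt (2 * PI) / 2).
Proof.
  set (P := fun u => - (u * phi u)).
  assert (HdP : forall v, is_derive P v (v ^ 2 * phi v - phi v)).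
  { intros v. unfold P, phi. auto_derive. auto. norm_exp (- v ^ 2 / 2). field. }
  assert (Ex : forall a b, ex_RInt (fun v => v ^ 2 * phi v - phi v) a b).
  { intros; apply ex_RInt_cont. intros; apply cont_der. unfold phi. auto_derive. auto. }
  assert (RdP : forall b, RInt (fun v => v ^ 2 * phi v - phi v) 0 b = P b - P 0).
  { intros b. apply is_RInt_unique. apply (is_RInt_derive (V := R_CompleteNormedModule) P); auto.
    intros; apply cont_der. unfold phi. auto_derive. auto. }
  assert (Ef : forall b, RInt (fun u => u ^ 2 * phi u) 0 b = Gp b + P b).
  { intros b. rewrite (RInt_ext _ (fun v => (v ^ 2 * phi v - phi v) + phi v)).
    2:{ intros; toR; ring. }
    rewrite RInt_plus_R; auto. 2:{ apply phi_ex. }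
    rewrite RdP. unfold Gp, P. rewrite Rmult_0_l. toR; ring. }
  split.
  - intros b _. apply ex_RInt_cont. intros; apply cont_der. unfold phi. auto_derive; auto.
  - apply is_lim_ext with (fun b => Gp b + P b). { intros; symmetry; apply Ef. }
    replace (sqrt (2 * PI) / 2) with (sqrt (2 * PI) / 2 + - 0) by ring.
    apply is_lim_plus'. apply Gp_lim.
    unfold P. apply (is_lim_ext (fun b => -1 * (b * phi b))). { intros; ring. }
    replace (- 0) with (-1 * 0) by ring. apply (is_lim_scal_l _ (-1) p_infty 0).
    apply (is_lim_le_le_loc (fun _ => 0) (fun b => exp (2 ^ 2 / (2 * 1)) * exp (- b))).
    + exists 0. intros y Hy. split. { left. apply Rmult_lt_0_compat; auto. apply phi_pos. }
      assert (Q := quad_exp 1 1 y ltac:(lra)). unfold phi.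
      replace (1 + 1) with 2 in Q by ring.
      apply Rle_trans with (exp (1 * y) * exp (- (1 * y ^ 2) / 2)); [|exact Q].
      replace (- (1 * y ^ 2) / 2) with (- y ^ 2 / 2) by field.
      apply Rmult_le_compat_r. left; apply exp_pos. rewrite Rmult_1_l.
      generalize (exp_ineq1_le y); lra.
    + apply is_lim_const.
    + replace (Finite 0) with (Rbar_mult (exp (2 ^ 2 / (2 * 1))) 0) by (simpl; f_equal; ring).
      apply is_lim_scal_l. apply exp_neg_lim.
Qed.

Lemma IG_mom2_scaled d : 0 < d ->
  IG (fun u => u ^ 2 * exp (- (d * u ^ 2) / 2)) (sqrt (2 * PI) / (2 * d * sqrt d)).
Proof.
  intros Hd. assert (Hs : 0 < sqrt d) by (apply sqrt_lt_R0; auto).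
  assert (E : sqrt d * sqrt d = d) by (apply sqrt_sqrt; lra).
  assert (H := IG_scale _ _ (sqrt d) Hs IG_mom2).
  assert (H2 := IG_scal _ (/ d) _ H).
  eapply IG_ext; [|replace (sqrt (2 * PI) / (2 * d * sqrt d)) with (/ d * (sqrt (2 * PI) / 2 / sqrt d)); [exact H2|]].
  - intros x _. unfold phi. replace ((sqrt d * x) ^ 2) with (d * x ^ 2).
    field. lra. simpl. rewrite <- E at 1. ring.
  - field. split; lra.
Qed.


Definition IG2 (F : R -> R -> R) (L : R) : Prop :=
  exists g : R -> R, (forall x, 0 <= x -> IG (F x) (g x)) /\ IG g L.

Lemma IG2_unique F L1 L2 : IG2 F L1 -> IG2 F L2 -> L1 = L2.
Proof.
  intros [g1 [A1 B1]] [g2 [A2 B2]]. apply (IG_unique g1); auto.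
  apply IG_ext with g2; auto. intros x Hx. apply (IG_unique (F x)); [apply A2|apply A1]; lra.
Qed.

Lemma exp_le a b : a <= b -> exp a <= exp b.
Proof. intros [H|H]. left; apply exp_increasing; auto. rewrite H; lra. Qed.

Definition pick (P : R -> Prop) : R := epsilon (inhabits 0) P.

Lemma pick_spec (P : R -> Prop) : (exists x, P x) -> P (pick P).
Proof. intros H. unfold pick. apply epsilon_spec. auto. Qed.

Lemma inner_cont (H : R -> R -> R) (a B : R -> R) LB :
  (forall x y, 0 <= y -> continuous (H x) y) ->
  (forall x y, 0 < y -> Rabs (H x y) <= a x * B y) ->
  IG B LB ->
  (forall U, 0 <= U -> exists D LD, IG D LD /\ forall x x' y, Rabs x <= U -> Rabs x' <= U -> 0 < y ->
       Rabs (H x y - H x' y) <= Rabs (x - x') * D y) ->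
  exists h, (forall x, IG (H x) (h x)) /\ (forall x, continuous h x) /\ (forall x, Rabs (h x) <= a x * LB).
Proof.
  intros Hc Hb HB HL.
  assert (Ex : forall x, exists l, IG (H x) l).
  { intros x. apply IG_cmp with (fun y => a x * B y) (a x * LB).
    - intros b Hb0. apply ex_RInt_cont. intros z [h1 h2]. rewrite Rmin_left in h1 by lra. apply Hc; lra.
    - intros y Hy; apply Hb; auto.
    - apply IG_scal; auto. }
  set (h := fun x => pick (IG (H x))).
  assert (Hh : forall x, IG (H x) (h x)) by (intros x; apply pick_spec; auto).
  exists h. split; [auto|split].
  - intros x0. destruct (HL (Rabs x0 + 1)) as [D [LD [HD HDL]]]. { generalize (Rabs_pos x0); lra. }
    assert (Lip : forall x, Rabs (x - x0) < 1 -> Rabs (h x - h x0) <= Rabs (x - x0) * Rabs LD).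
    { intros x Hx. apply Rle_trans with (Rabs (x - x0) * LD).
      - apply IG_abs_le with (fun y => H x y - H x0 y) (fun y => Rabs (x - x0) * D y).
        + apply IG_minus; auto.
        + apply IG_scal; auto.
        + intros y Hy. apply HDL; auto.
          * assert (Rabs x - Rabs x0 <= Rabs (x - x0)) by apply Rabs_triang_inv. lra.
          * lra.
      - apply Rmult_le_compat_l. apply Rabs_pos. apply Rle_abs. }
    apply continuity_pt_filterlim. unfold continuity_pt, continue_in, limit1_in, limit_in.
    intros eps Heps. exists (Rmin 1 (eps / (Rabs LD + 1))). split.
    { apply Rmin_pos; try lra. apply Rdiv_lt_0_compat; auto. generalize (Rabs_pos LD); lra. }
    intros x [_ Hx]. simpl in *. unfold R_dist in *.
    assert (Hx1 : Rabs (x - x0) < 1) by (generalize (Rmin_l 1 (eps / (Rabs LD + 1))); lra).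
    assert (Hx2 : Rabs (x - x0) < eps / (Rabs LD + 1)) by (generalize (Rmin_r 1 (eps / (Rabs LD + 1))); lra).
    eapply Rle_lt_trans; [apply Lip; auto|].
    assert (P := Rabs_pos LD). assert (P2 := Rabs_pos (x - x0)).
    apply Rmult_lt_compat_r with (r := Rabs LD + 1) in Hx2; [|lra].
    unfold Rdiv in Hx2. rewrite Rmult_assoc, Rinv_l in Hx2 by lra. nra.
  - intros x. apply IG_abs_le with (H x) (fun y => a x * B y); auto. apply IG_scal; auto.
Qed.

Definition Q (c u v : R) : R := u ^ 2 - 2 * c * u * v + v ^ 2.
Definition W (r c u v : R) : R := rpow u r * rpow v r * exp (- Q c u v / 2).

Lemma Q_lower c u v : -1 <= c < 1 -> 0 <= u -> 0 <= v -> Rmin 1 (1 - c) * (u ^ 2 + v ^ 2) <= Q c u v.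
Proof.
  intros Hc Hu Hv. unfold Q. destruct (Rle_dec c 0).
  - assert (Rmin 1 (1 - c) <= 1) by apply Rmin_l. assert (0 <= u * v) by nra.
    assert (0 <= u ^ 2 + v ^ 2) by nra.
    assert (0 <= - c * (u * v)) by (apply Rmult_le_pos; lra).
    assert (Rmin 1 (1 - c) * (u ^ 2 + v ^ 2) <= 1 * (u ^ 2 + v ^ 2)) by (apply Rmult_le_compat_r; lra).
    replace (u ^ 2 - 2 * c * u * v + v ^ 2) with ((u ^ 2 + v ^ 2) + 2 * (- c * (u * v))) by ring. lra.
  - rewrite Rmin_right by lra. assert (0 <= c * (u - v) ^ 2) by (apply Rmult_le_pos; [lra|apply pow2_ge_0]).
    replace (u ^ 2 - 2 * c * u * v + v ^ 2) with ((1 - c) * (u ^ 2 + v ^ 2) + c * (u - v) ^ 2) by ring. lra.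
Qed.

Lemma exp_poly_cont (f : R -> R) x : ex_derive f x -> continuous (fun y => exp (f y)) x.
Proof. intros H. apply cont_der. apply ex_derive_comp; auto. apply ex_derive_Reals_1. apply derivable_pt_exp. Qed.

Lemma gauss_bound r k y : 0 < r -> 0 < k -> Rabs (rpow y r * exp (- (k * y ^ 2) / 2)) <= exp ((r + 1) ^ 2 / (2 * k)) * exp (- y).
Proof.
  intros Hr Hk. rewrite Rabs_right.
  2:{ apply Rle_ge, Rmult_le_pos. apply rpow_nonneg. left; apply exp_pos. }
  eapply Rle_trans; [|apply (quad_exp r k y Hk)].
  apply Rmult_le_compat_r. left; apply exp_pos. apply rpow_le_exp; auto.
Qed.

Lemma rmax0_lip x x' : Rabs (Rmax 0 x - Rmax 0 x') <= Rabs (x - x').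
Proof.
  unfold Rmax. destruct (Rle_dec 0 x); destruct (Rle_dec 0 x'); unfold Rabs;
  repeat match goal with |- context [Rcase_abs ?a] => destruct (Rcase_abs a) end; lra.
Qed.

Lemma rmax0_bounds x U : Rabs x <= U -> 0 <= Rmax 0 x <= U.
Proof. intros H. split. apply Rmax_l. apply Rmax_lub. generalize (Rabs_pos x); lra.
  generalize (Rle_abs x); lra. Qed.

Lemma H_lip r c U x x' y : 0 < r -> -1 <= c < 1 -> Rabs x <= U -> Rabs x' <= U -> 0 < y ->
  Rabs (rpow y r * exp (- Q c (Rmax 0 x) y / 2) - rpow y r * exp (- Q c (Rmax 0 x') y / 2))
  <= Rabs (x - x') * (rpow y r * (U + y) * exp (- (Rmin 1 (1 - c) * y ^ 2) / 2)).
Proof.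
  intros Hr Hc Hx Hx' Hy.
  set (k := Rmin 1 (1 - c)). set (X := Rmax 0 x). set (X' := Rmax 0 x').
  destruct (rmax0_bounds x U Hx) as [X0 XU]. destruct (rmax0_bounds x' U Hx') as [X'0 X'U].
  fold X X' in X0, XU, X'0, X'U.
  rewrite <- Rmult_minus_distr_l, Rabs_mult, (Rabs_right (rpow y r)) by (apply Rle_ge, rpow_nonneg).
  assert (E := exp_diff_bound (- Q c X y / 2) (- Q c X' y / 2)).
  assert (Hab : Rabs (- Q c X y / 2 - - Q c X' y / 2) <= Rabs (x - x') * (U + y)).
  { replace (- Q c X y / 2 - - Q c X' y / 2) with ((X' - X) * ((X' + X - 2 * c * y) / 2)) by (unfold Q; field).
    rewrite Rabs_mult. apply Rmult_le_compat; try apply Rabs_pos.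
    - rewrite Rabs_minus_sym. apply rmax0_lip.
    - apply Rabs_le. split; nra. }
  assert (Hmax : exp (Rmax (- Q c X y / 2) (- Q c X' y / 2)) <= exp (- (k * y ^ 2) / 2)).
  { apply exp_le. apply Rmax_lub.
    - assert (QL := Q_lower c X y Hc X0 (Rlt_le _ _ Hy)). fold k in QL.
      assert (0 <= k) by (unfold k; apply Rmin_glb; lra). assert (0 <= k * X ^ 2) by (apply Rmult_le_pos; [lra|apply pow2_ge_0]). nra.
    - assert (QL := Q_lower c X' y Hc X'0 (Rlt_le _ _ Hy)). fold k in QL.
      assert (0 <= k) by (unfold k; apply Rmin_glb; lra). assert (0 <= k * X' ^ 2) by (apply Rmult_le_pos; [lra|apply pow2_ge_0]). nra. }
  assert (P1 := rpow_nonneg y r).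
  assert (Step : Rabs (exp (- Q c X y / 2) - exp (- Q c X' y / 2)) <= Rabs (x - x') * (U + y) * exp (- (k * y ^ 2) / 2)).
  { eapply Rle_trans; [apply E|]. apply Rmult_le_compat; auto. apply Rabs_pos. left; apply exp_pos. }
  apply Rle_trans with (rpow y r * (Rabs (x - x') * (U + y) * exp (- (k * y ^ 2) / 2))).
  - apply Rmult_le_compat_l; auto.
  - right. ring.
Qed.

Lemma IG_gauss_poly r k p : 0 < r -> 0 < k -> 0 <= p ->
  exists L, IG (fun y => rpow y r * (p + y) * exp (- (k * y ^ 2) / 2)) L.
Proof.
  intros Hr Hk Hp. apply IG_bound with ((p + 1) * exp ((r + 1 + 1) ^ 2 / (2 * k))).
  - intros y _. apply cont_mult. apply cont_mult. apply rpow_cont; auto.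
    apply cont_der; auto_derive; auto. apply exp_poly_cont. auto_derive; auto.
  - intros y Hy. rewrite Rabs_right.
    2:{ apply Rle_ge. apply Rmult_le_pos. apply Rmult_le_pos. apply rpow_nonneg. lra. left; apply exp_pos. }
    assert (H1 := rpow_le_exp y r Hr). assert (H2 := exp_ineq1_le y).
    assert (H3 := quad_exp (r + 1) k y Hk).
    assert (H4 : p + y <= (p + 1) * exp y) by nra.
    assert (E : exp (r * y) * exp y = exp ((r + 1) * y)) by (rewrite <- exp_plus; f_equal; ring).
    apply Rle_trans with (exp (r * y) * ((p + 1) * exp y) * exp (- (k * y ^ 2) / 2)).
    + apply Rmult_le_compat_r. left; apply exp_pos. apply Rmult_le_compat; auto. apply rpow_nonneg. lra.
    + replace (exp (r * y) * ((p + 1) * exp y) * exp (- (k * y ^ 2) / 2))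
        with ((p + 1) * (exp ((r + 1) * y) * exp (- (k * y ^ 2) / 2))) by (rewrite <- E; ring).
      rewrite Rmult_assoc. apply Rmult_le_compat_l; lra.
Qed.

Lemma W_IG2 r c : 0 < r -> -1 <= c < 1 ->
  exists g L, (forall x, 0 <= x -> IG (W r c x) (g x)) /\ (forall x, continuous g x) /\ IG g L.
Proof.
  intros Hr Hc. set (k := Rmin 1 (1 - c)).
  assert (Hk : 0 < k) by (unfold k; apply Rmin_glb_lt; lra).
  set (H := fun x y => rpow y r * exp (- Q c (Rmax 0 x) y / 2)).
  set (a := fun x => exp (- (k * (Rmax 0 x) ^ 2) / 2)).
  set (B := fun y => rpow y r * exp (- (k * y ^ 2) / 2)).
  destruct (IG_bound B (exp ((r + 1) ^ 2 / (2 * k)))) as [LB HB].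
  { intros y _. apply cont_mult. apply rpow_cont; auto. apply exp_poly_cont. auto_derive; auto. }
  { intros y _. apply gauss_bound; auto. }
  destruct (inner_cont H a B LB) as [h [Hh1 [Hh2 Hh3]]]; auto.
  - intros x y _. apply cont_mult. apply rpow_cont; auto. apply exp_poly_cont. unfold Q. auto_derive; auto.
  - intros x y Hy. unfold H, a, B. rewrite Rabs_right.
    2:{ apply Rle_ge, Rmult_le_pos. apply rpow_nonneg. left; apply exp_pos. }
    replace (exp (- (k * Rmax 0 x ^ 2) / 2) * (rpow y r * exp (- (k * y ^ 2) / 2)))
      with (rpow y r * exp (- (k * (Rmax 0 x ^ 2 + y ^ 2)) / 2)).
    2:{ replace (- (k * (Rmax 0 x ^ 2 + y ^ 2)) / 2) with (- (k * Rmax 0 x ^ 2) / 2 + - (k * y ^ 2) / 2) by field.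
        rewrite exp_plus. ring. }
    apply Rmult_le_compat_l. apply rpow_nonneg. apply exp_le.
    assert (QL := Q_lower c (Rmax 0 x) y Hc (Rmax_l 0 x) (Rlt_le _ _ Hy)). fold k in QL. lra.
  - intros U HU. destruct (IG_gauss_poly r k U Hr Hk HU) as [LD HD].
    exists (fun y => rpow y r * (U + y) * exp (- (k * y ^ 2) / 2)), LD. split; auto.
    intros x x' y Hx Hx' Hy. unfold H. apply H_lip; auto.
  - exists (fun x => rpow x r * h x).
    destruct (IG_bound (fun x => rpow x r * h x) (Rabs LB * exp ((r + 1) ^ 2 / (2 * k)))) as [L HL].
    { intros y _. apply cont_mult. apply rpow_cont; auto. auto. }
    { intros y Hy. rewrite Rabs_mult, (Rabs_right (rpow y r)) by (apply Rle_ge, rpow_nonneg).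
      assert (B1 := Hh3 y). unfold a in B1. rewrite Rmax_right in B1 by lra.
      assert (B2 : Rabs (h y) <= exp (- (k * y ^ 2) / 2) * Rabs LB).
      { eapply Rle_trans; [apply B1|]. apply Rmult_le_compat_l. left; apply exp_pos. apply Rle_abs. }
      assert (G := gauss_bound r k y Hr Hk).
      rewrite Rabs_right in G by (apply Rle_ge, Rmult_le_pos; [apply rpow_nonneg|left; apply exp_pos]).
      apply Rle_trans with (rpow y r * (exp (- (k * y ^ 2) / 2) * Rabs LB)).
      - apply Rmult_le_compat_l; auto. apply rpow_nonneg.
      - assert (0 <= Rabs LB) by apply Rabs_pos.
        replace (rpow y r * (exp (- (k * y ^ 2) / 2) * Rabs LB)) with (Rabs LB * (rpow y r * exp (- (k * y ^ 2) / 2))) by ring.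
        rewrite (Rmult_assoc (Rabs LB)). apply Rmult_le_compat_l; auto. }
    exists L. split; [|split].
    + intros x Hx. eapply IG_ext; [|apply (IG_scal (H x) (rpow x r) (h x) (Hh1 x))].
      intros y _. unfold H, W. rewrite Rmax_right by lra. ring.
    + intros x. apply cont_mult. apply rpow_cont; auto. auto.
    + auto.
Qed.


Definition J (r c : R) : R := pick (IG2 (W r c)).

Lemma J_spec r c : 0 < r -> -1 <= c < 1 -> IG2 (W r c) (J r c).
Proof.
  intros Hr Hc. unfold J. apply pick_spec. destruct (W_IG2 r c Hr Hc) as [g [L [H1 [_ H2]]]].
  exists L, g. auto.
Qed.

Lemma IG_zero : IG (fun _ => 0) 0.
Proof.
  assert (H := IG_scal _ 0 _ IG_exp). replace (0 * 1) with 0 in H by ring.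
  eapply IG_ext; [|exact H]. intros; simpl; ring.
Qed.

Lemma IG2_diff_bound F1 F2 L1 L2 A B LA LB : IG2 F1 L1 -> IG2 F2 L2 ->
  (forall x y, 0 < x -> 0 < y -> Rabs (F1 x y - F2 x y) <= A x * B y) -> IG A LA -> IG B LB ->
  Rabs (L1 - L2) <= LA * LB.
Proof.
  intros [g1 [I1 O1]] [g2 [I2 O2]] Hb HA HB.
  apply IG_abs_le with (fun x => g1 x - g2 x) (fun x => A x * LB).
  - apply IG_minus; auto.
  - assert (H := IG_scal A LB LA HA). replace (LB * LA) with (LA * LB) in H by ring.
    eapply IG_ext; [|exact H]. intros; simpl; ring.
  - intros x Hx. apply IG_abs_le with (fun y => F1 x y - F2 x y) (fun y => A x * B y).
    + apply IG_minus; [apply I1|apply I2]; lra.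
    + apply IG_scal; auto.
    + intros y Hy; apply Hb; auto.
Qed.

Lemma W_diff_pt r c x y : 0 < r -> -1 <= c <= 0 -> 0 < x -> 0 < y ->
  Rabs (W r c x y - W r (-1) x y) <=
  ((1 + c) * (rpow x r * (0 + x) * exp (- (1 * x ^ 2) / 2))) * (rpow y r * (0 + y) * exp (- (1 * y ^ 2) / 2)).
Proof.
  intros Hr Hc Hx Hy. unfold W.
  set (a := - Q c x y / 2). set (b := - Q (-1) x y / 2).
  assert (Eab : a - b = (1 + c) * x * y) by (unfold a, b, Q; field).
  assert (Hab : b <= a) by (assert (0 <= (1 + c) * x * y) by (apply Rmult_le_pos; [apply Rmult_le_pos|]; lra); lra).
  destruct (exp_diff_aux a b Hab) as [D1 D2].
  assert (Ha : a <= - (1 * x ^ 2) / 2 + - (1 * y ^ 2) / 2).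
  { unfold a, Q. assert (0 <= - c * (x * y)) by (apply Rmult_le_pos; nra).
    replace (- (x ^ 2 - 2 * c * x * y + y ^ 2) / 2) with (- (1 * x ^ 2) / 2 + - (1 * y ^ 2) / 2 - (- c * (x * y))) by field. lra. }
  assert (Ea : exp a <= exp (- (1 * x ^ 2) / 2) * exp (- (1 * y ^ 2) / 2)) by (rewrite <- exp_plus; apply exp_le; auto).
  assert (Px := rpow_nonneg x r). assert (Py := rpow_nonneg y r).
  replace (rpow x r * rpow y r * exp a - rpow x r * rpow y r * exp b) with (rpow x r * rpow y r * (exp a - exp b)) by ring.
  rewrite Rabs_mult, Rabs_right by (apply Rle_ge; apply Rmult_le_pos; auto).
  rewrite Rabs_right by lra.
  apply Rle_trans with (rpow x r * rpow y r * ((a - b) * (exp (- (1 * x ^ 2) / 2) * exp (- (1 * y ^ 2) / 2)))).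
  - apply Rmult_le_compat_l. apply Rmult_le_pos; auto. eapply Rle_trans; [apply D2|].
    apply Rmult_le_compat_l; lra.
  - rewrite Eab. right. ring.
Qed.

Lemma J_close r : 0 < r -> exists C, 0 <= C /\ forall c, -1 <= c <= 0 -> Rabs (J r c - J r (-1)) <= (1 + c) * C.
Proof.
  intros Hr. destruct (IG_gauss_poly r 1 0 Hr Rlt_0_1 (Rle_refl 0)) as [LA HA].
  exists (Rabs LA * Rabs LA). split. apply Rmult_le_pos; apply Rabs_pos.
  intros c Hc.
  assert (H := IG2_diff_bound (W r c) (W r (-1)) (J r c) (J r (-1))
     (fun x => (1 + c) * (rpow x r * (0 + x) * exp (- (1 * x ^ 2) / 2)))
     (fun y => rpow y r * (0 + y) * exp (- (1 * y ^ 2) / 2)) ((1 + c) * LA) LA).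
  eapply Rle_trans; [apply H|].
  - apply J_spec; lra.
  - apply J_spec; lra.
  - intros x y Hx Hy. apply W_diff_pt; auto.
  - apply IG_scal; auto.
  - auto.
  - rewrite Rmult_assoc. apply Rmult_le_compat_l. lra.
    rewrite <- Rabs_mult. apply Rle_abs.
Qed.

Lemma IG_ge_RInt01 f l : IG f l -> (forall x, 0 < x -> 0 <= f x) -> RInt f 0 1 <= l.
Proof.
  intros [A B] Hf.
  assert (H : Rbar_le (RInt f 0 1) l).
  { apply (is_lim_le_loc (fun _ => RInt f 0 1) (fun b => RInt f 0 b) p_infty); [|apply is_lim_const|auto].
    exists 1. intros b Hb. rewrite <- (RInt_Chasles_R f 0 1 b).
    - assert (0 <= RInt f 1 b). { apply RInt_ge_0; [lra| |].
        apply (ex_RInt_Chasles_2 f 0); [lra|apply A; lra]. intros x Hx; apply Hf; lra. }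
      lra.
    - apply A; lra.
    - apply (ex_RInt_Chasles_2 f 0); [lra|apply A; lra]. }
  simpl in H. auto.
Qed.

Lemma IG_pos f l : IG f l -> (forall x, 0 < x -> 0 <= f x) -> (forall x, 0 <= x <= 1 -> continuous f x) ->
  (forall x, 0 < x < 1 -> 0 < f x) -> 0 < l.
Proof.
  intros H1 H2 H3 H4. eapply Rlt_le_trans; [|apply (IG_ge_RInt01 f l H1 H2)].
  apply RInt_gt_0; auto. lra.
Qed.

Lemma rpow_pos_lt x r : 0 < x -> 0 < rpow x r.
Proof. intros Hx. rewrite rpow_pos; auto. apply exp_pos. Qed.

Lemma J_pos r : 0 < r -> 0 < J r (-1).
Proof.
  intros Hr. destruct (W_IG2 r (-1) Hr ltac:(lra)) as [g [L [I1 [C O]]]].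
  assert (E : J r (-1) = L).
  { apply (IG2_unique (W r (-1))). apply J_spec; lra. exists g; auto. }
  rewrite E.
  assert (Gnn : forall x, 0 < x -> 0 <= g x).
  { intros x Hx. apply IG_le with (fun _ => 0) (W r (-1) x). apply IG_zero. apply I1; lra.
    intros y Hy. unfold W. apply Rmult_le_pos. apply Rmult_le_pos; apply rpow_nonneg. left; apply exp_pos. }
  apply IG_pos with g; auto.
  intros x Hx. apply IG_pos with (W r (-1) x). apply I1; lra.
  - intros y Hy. unfold W. apply Rmult_le_pos. apply Rmult_le_pos; apply rpow_nonneg. left; apply exp_pos.
  - intros y _. unfold W. apply cont_mult. apply cont_mult. apply continuous_const. apply rpow_cont; auto.
    apply exp_poly_cont. unfold Q. auto_derive. auto.
  - intros y Hy. unfold W. apply Rmult_lt_0_compat. apply Rmult_lt_0_compat; apply rpow_pos_lt; lra. apply exp_pos.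
Qed.

Lemma J_diff1 c : -1 < c < 1 ->
  J 1 c - J 1 (- c) = c * PI / ((1 - c ^ 2) * sqrt (1 - c ^ 2)).
Proof.
  intros Hc. set (d := 1 - c ^ 2). assert (Hd : 0 < d) by (unfold d; nra).
  destruct (J_spec 1 c Rlt_0_1 ltac:(lra)) as [g1 [I1 O1]].
  destruct (J_spec 1 (- c) Rlt_0_1 ltac:(lra)) as [g2 [I2 O2]].
  assert (Inner : forall x, 0 <= x -> g1 x - g2 x = rpow x 1 * exp (- (d * x ^ 2) / 2) * (c * x * sqrt (2 * PI))).
  { intros x Hx. apply (IG_unique (fun y => W 1 c x y - W 1 (- c) x y)).
    - apply IG_minus; auto.
    - eapply IG_ext; [|apply (IG_scal _ (rpow x 1 * exp (- (d * x ^ 2) / 2)) _ (IG_S (c * x)))].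
      intros y Hy. unfold W. rewrite (rpow_pos y 1 Hy), Rpower_1 by auto. unfold phi.
      replace (- Q c x y / 2) with (- (d * x ^ 2) / 2 + - (y - c * x) ^ 2 / 2) by (unfold Q, d; field).
      replace (- Q (- c) x y / 2) with (- (d * x ^ 2) / 2 + - (y + c * x) ^ 2 / 2) by (unfold Q, d; field).
      rewrite !exp_plus. ring. }
  apply (IG_unique (fun x => g1 x - g2 x)).
  - apply IG_minus; auto.
  - assert (H := IG_scal _ (c * sqrt (2 * PI)) _ (IG_mom2_scaled d Hd)).
    assert (S : sqrt (2 * PI) * sqrt (2 * PI) = 2 * PI) by (apply sqrt_sqrt; generalize PI_RGT_0; lra).
    assert (0 < sqrt d) by (apply sqrt_lt_R0; auto).
    replace (c * sqrt (2 * PI) * (sqrt (2 * PI) / (2 * d * sqrt d))) with (c * PI / (d * sqrt d)) in H.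
    2:{ replace (c * sqrt (2 * PI) * (sqrt (2 * PI) / (2 * d * sqrt d))) with (c * (sqrt (2 * PI) * sqrt (2 * PI)) / (2 * d * sqrt d)) by (field; lra).
        rewrite S. field. lra. }
    eapply IG_ext; [|exact H].
    intros x Hx. rewrite Inner by lra. rewrite (rpow_pos x 1 Hx), Rpower_1 by auto. ring.
Qed.


Lemma IG_hi f l : IG f l -> has_integral_0inf f l.
Proof.
  intros [A B]. split.
  - intros b Hb. constructor. apply ex_RInt_Reals_0. auto.
  - intros eps Heps. rewrite lim_pinf_eps in B. destruct (B eps Heps) as [M HM].
    exists (M + 1). intros b pr Hb. rewrite <- RInt_Reals. apply HM. lra.
Qed.

Lemma IG2_hi F L : IG2 F L -> has_integral2_0inf F L.
Proof.
  intros [g [A B]]. exists g. split. intros x Hx. apply IG_hi; auto. apply IG_hi; auto.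
Qed.

Lemma IG_zero_ext f : (forall x, 0 < x -> f x = 0) -> IG f 0.
Proof. intros H. eapply IG_ext; [|apply IG_zero]. intros; symmetry; auto. Qed.

Lemma IG2_R F L : IG2 F L -> (forall x y, x < 0 -> F x y = 0) -> (forall x y, y < 0 -> F x y = 0) ->
  has_integral2_R F L.
Proof.
  intros [g [A B]] Hx Hy.
  exists (fun x => if Rle_dec 0 x then g x else 0). split.
  - intros x. destruct (Rle_dec 0 x) as [Px|Px].
    + exists (g x), 0. split; [apply IG_hi; auto|split; [|ring]].
      apply IG_hi. apply IG_zero_ext. intros y Hy0. apply Hy. lra.
    + exists 0, 0. split; [|split; [|ring]]; apply IG_hi; apply IG_zero_ext; intros; apply Hx; lra.
  - exists L, 0. split; [|split; [|ring]]; apply IG_hi.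
    + eapply IG_ext; [|exact B]. intros x Hx0. destruct (Rle_dec 0 x); auto; lra.
    + apply IG_zero_ext. intros x Hx0. destruct (Rle_dec 0 (- x)); auto; lra.
Qed.

Lemma IG2_R_refl F L : IG2 (fun x w => F x (- w)) L -> (forall x y, x < 0 -> F x y = 0) ->
  (forall x y, 0 < y -> F x y = 0) -> has_integral2_R F L.
Proof.
  intros [g [A B]] Hx Hy.
  exists (fun x => if Rle_dec 0 x then g x else 0). split.
  - intros x. destruct (Rle_dec 0 x) as [Px|Px].
    + exists 0, (g x). split; [|split; [apply IG_hi; auto|ring]].
      apply IG_hi. apply IG_zero_ext. intros y Hy0. apply Hy. lra.
    + exists 0, 0. split; [|split; [|ring]]; apply IG_hi; apply IG_zero_ext; intros; apply Hx; lra.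
  - exists L, 0. split; [|split; [|ring]]; apply IG_hi.
    + eapply IG_ext; [|exact B]. intros x Hx0. destruct (Rle_dec 0 x); auto; lra.
    + apply IG_zero_ext. intros x Hx0. destruct (Rle_dec 0 (- x)); auto; lra.
Qed.

Lemma IG2_ext F G L : (forall x y, 0 <= x -> 0 < y -> F x y = G x y) -> IG2 F L -> IG2 G L.
Proof.
  intros H [g [A B]]. exists g. split; auto. intros x Hx. eapply IG_ext; [|apply A; auto].
  intros; apply H; auto.
Qed.

Lemma IG2_scal F L k : IG2 F L -> IG2 (fun x y => k * F x y) (k * L).
Proof.
  intros [g [A B]]. exists (fun x => k * g x). split. intros x Hx. apply IG_scal; auto. apply IG_scal; auto.
Qed.

Lemma IG2_scale F L t : 0 < t -> IG2 (fun u v => F (t * u) (t * v)) L -> IG2 F (t * t * L).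
Proof.
  intros Ht [g [A B]]. assert (Hi : 0 < / t) by (apply Rinv_0_lt_compat; auto).
  exists (fun x => t * g (/ t * x)). split.
  - intros x Hx. assert (H := IG_scale _ _ (/ t) Hi (A (/ t * x) ltac:(apply Rmult_le_pos; lra))).
    simpl in H. replace (g (/ t * x) / / t) with (t * g (/ t * x)) in H by (field; lra).
    eapply IG_ext; [|exact H]. intros y _. simpl. f_equal; field; lra.
  - assert (H := IG_scal _ t _ (IG_scale _ _ (/ t) Hi B)).
    replace (t * (L / / t)) with (t * t * L) in H by (field; lra). exact H.
Qed.

Definition F1 (r s c x y : R) : R := rpow (posp x * posp y) r * gauss_density s c x y.

Lemma posp_scale t u : 0 < t -> posp (t * u) = t * posp u.
Proof.
  intros Ht. unfold posp, Rmax. destruct (Rle_dec 0 (t * u)); destruct (Rle_dec 0 u); try ring; nra.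
Qed.

Lemma posp_pos u : 0 < u -> posp u = u.
Proof. intros H. unfold posp. rewrite Rmax_right; lra. Qed.

Lemma posp_nonpos u : u <= 0 -> posp u = 0.
Proof. intros H. unfold posp. rewrite Rmax_left; lra. Qed.

Lemma detVar_pos s c : 0 < s -> -1 < c < 1 -> 0 < detVar s c.
Proof.
  intros Hs Hc. unfold detVar.
  replace (s ^ 4 - (c * s ^ 2) ^ 2) with (s ^ 4 * (1 - c ^ 2)) by ring.
  apply Rmult_lt_0_compat. apply pow_lt; auto. nra.
Qed.

Lemma F1_scaled r s c u v : 0 < r -> 0 < s -> -1 < c < 1 ->
  let D := detVar s c in let t := sqrt D / s in
  F1 r s c (t * u) (t * v) = (Rpower t (2 * r) / (2 * PI * sqrt D)) * W r c u v.
Proof.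
  intros Hr Hs Hc D t.
  assert (HD : 0 < D) by (apply detVar_pos; auto).
  assert (HsD : 0 < sqrt D) by (apply sqrt_lt_R0; auto).
  assert (Ht : 0 < t) by (unfold t; apply Rdiv_lt_0_compat; auto).
  assert (Est : s ^ 2 * t ^ 2 = D).
  { unfold t. replace (s ^ 2 * (sqrt D / s) ^ 2) with (sqrt D * sqrt D) by (field; lra). apply sqrt_sqrt; lra. }
  unfold F1, W. rewrite !posp_scale by auto.
  assert (Hp : rpow (t * posp u * (t * posp v)) r = Rpower t (2 * r) * (rpow u r * rpow v r)).
  { destruct (Rle_dec u 0) as [Hu|Hu].
    - rewrite (posp_nonpos u), (rpow_nonpos u r) by auto. rewrite Rmult_0_r, Rmult_0_l, rpow_nonpos by lra. ring.
    - destruct (Rle_dec v 0) as [Hv|Hv].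
      + rewrite (posp_nonpos v), (rpow_nonpos v r) by auto. rewrite Rmult_0_r, Rmult_0_r, rpow_nonpos by lra. ring.
      + rewrite !posp_pos by lra. rewrite !rpow_pos by (try apply Rmult_lt_0_compat; try apply Rmult_lt_0_compat; lra).
        replace (t * u * (t * v)) with ((t * t) * (u * v)) by ring.
        rewrite <- Rpower_mult_distr by (apply Rmult_lt_0_compat; lra).
        rewrite <- Rpower_mult_distr by lra. rewrite <- Rpower_mult_distr by lra.
        replace (2 * r) with (r + r) by ring. rewrite Rpower_plus. ring. }
  rewrite Hp. unfold gauss_density. fold D.
  replace (- (s ^ 2 * (t * u) ^ 2 - 2 * c * s ^ 2 * (t * u) * (t * v) + s ^ 2 * (t * v) ^ 2) / (2 * D))
    with (- Q c u v / 2).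
  2:{ replace (- (s ^ 2 * (t * u) ^ 2 - 2 * c * s ^ 2 * (t * u) * (t * v) + s ^ 2 * (t * v) ^ 2) / (2 * D))
        with (- (s ^ 2 * t ^ 2) * Q c u v / (2 * D)) by (unfold Q; field; lra).
      rewrite Est. field. lra. }
  field. split; [|generalize PI_RGT_0]; lra.
Qed.

Lemma exp_minus a b : exp (a - b) = exp a / exp b.
Proof. unfold Rminus. rewrite exp_plus, exp_Ropp. reflexivity. Qed.

Lemma coef_id r s c : 0 < s -> -1 < c < 1 ->
  let D := detVar s c in let t := sqrt D / s in
  t * t * (Rpower t (2 * r) / (2 * PI * sqrt D)) = Rpower s (- 2 * (1 + r)) * Rpower D ((2 * r + 1) / 2) / (2 * PI).
Proof.
  intros Hs Hc D t.
  assert (HD : 0 < D) by (apply detVar_pos; auto).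
  assert (EsD : sqrt D = exp (/ 2 * ln D)) by (rewrite <- Rpower_sqrt by auto; reflexivity).
  set (lt := / 2 * ln D - ln s).
  assert (Et : t = exp lt).
  { unfold t, lt. rewrite EsD. rewrite exp_minus, exp_ln by auto. reflexivity. }
  assert (Ept : Rpower t (2 * r) = exp (2 * r * lt)) by (unfold Rpower; rewrite Et, ln_exp; reflexivity).
  rewrite Ept. unfold Rpower. rewrite EsD.
  assert (E : exp lt * exp lt * exp (2 * r * lt) = exp (- 2 * (1 + r) * ln s) * exp ((2 * r + 1) / 2 * ln D) * exp (/ 2 * ln D)).
  { rewrite <- !exp_plus. f_equal. unfold lt. field. }
  rewrite Et. assert (0 < exp (/ 2 * ln D)) by apply exp_pos.
  assert (PI <> 0) by (generalize PI_RGT_0; lra). assert (exp (/ 2 * ln D) <> 0) by lra.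
  replace (exp lt * exp lt * (exp (2 * r * lt) / (2 * PI * exp (/ 2 * ln D))))
    with ((exp lt * exp lt * exp (2 * r * lt)) / (2 * PI * exp (/ 2 * ln D))) by (field; auto).
  rewrite E. field. auto.
Qed.


Definition Tt (x : R) : R := sqrt (2 * PI) / 2 - Gp x.

Lemma Shift_phi c b : RInt (fun v => phi (v + c)) 0 b = Gp (b + c) - Gp c.
Proof.
  assert (H := RInt_comp_lin_R phi 1 c 0 b (phi_ex _ _)).
  rewrite (RInt_ext _ (fun y => 1 * phi (1 * y + c))). rewrite H.
  replace (1 * 0 + c) with c by ring. replace (1 * b + c) with (b + c) by ring. apply RInt_phi.
  intros x _. replace (1 * x + c) with (x + c) by ring. toR. ring.
Qed.

Lemma phi_shift_ex c a b : ex_RInt (fun v => phi (v + c)) a b.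
Proof. apply ex_RInt_cont. intros; apply cont_der. unfold phi. auto_derive. auto. Qed.

Lemma IG_shift b : IG (fun s => phi (s + b)) (Tt b).
Proof.
  split. intros; apply phi_shift_ex.
  apply is_lim_ext with (fun B => Gp (B + b) - Gp b). { intros; symmetry; apply Shift_phi. }
  unfold Tt. apply is_lim_minus'. apply lim_pinf_shift. apply Gp_lim. apply is_lim_const.
Qed.

Lemma Tt_bound b : 0 < b -> 0 <= Tt b <= phi b / b.
Proof.
  intros Hb. split.
  - apply IG_le with (fun _ => 0) (fun s => phi (s + b)). apply IG_zero. apply IG_shift.
    intros; left; apply phi_pos.
  - assert (H1 := IG_scal _ (phi b) _ (IG_scale _ _ b Hb IG_exp)).
    replace (phi b * (1 / b)) with (phi b / b) in H1 by (field; lra).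
    apply IG_le with (fun s => phi (s + b)) (fun u => phi b * exp (- (b * u))). apply IG_shift. exact H1.
    intros s Hs. unfold phi. rewrite <- exp_plus. apply exp_le.
    assert (0 <= s ^ 2) by apply pow2_ge_0. replace (- (s + b) ^ 2 / 2) with (- b ^ 2 / 2 + - (b * s) - s ^ 2 / 2) by field.
    lra.
Qed.

Lemma b2phi_lim : is_lim (fun b => b ^ 2 * phi b) p_infty 0.
Proof.
  apply (is_lim_le_le_loc (fun _ => 0) (fun b => exp ((2 + 1) ^ 2 / (2 * 1)) * exp (- b))).
  - exists 0. intros y Hy. split. { apply Rmult_le_pos. apply pow2_ge_0. left; apply phi_pos. }
    assert (Q := quad_exp 2 1 y ltac:(lra)). unfold phi.
    apply Rle_trans with (exp (2 * y) * exp (- (1 * y ^ 2) / 2)); [|exact Q].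
    replace (- (1 * y ^ 2) / 2) with (- y ^ 2 / 2) by field.
    apply Rmult_le_compat_r. left; apply exp_pos.
    assert (y <= exp y) by (generalize (exp_ineq1_le y); lra).
    replace (2 * y) with (y + y) by ring. rewrite exp_plus. simpl. nra.
  - apply is_lim_const.
  - replace (Finite 0) with (Rbar_mult (exp ((2 + 1) ^ 2 / (2 * 1))) 0) by (simpl; f_equal; ring).
    apply is_lim_scal_l. apply exp_neg_lim.
Qed.

Lemma IG_inner_m1 x : IG (fun y => y * phi (y + x)) (phi x - x * Tt x).
Proof.
  assert (HA : IG (fun y => (y + x) * phi (y + x)) (phi x)).
  { assert (R : forall b, RInt (fun y => (y + x) * phi (y + x)) 0 b = phi x - phi (b + x)).
    { intros b. apply is_RInt_unique.
      replace (phi x - phi (b + x)) with (minus ((fun y => - phi (y + x)) b) ((fun y => - phi (y + x)) 0)).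
      2:{ unfold minus, plus, opp; simpl. replace (0 + x) with x by ring. ring. }
      apply (is_RInt_derive (V := R_CompleteNormedModule) (fun y => - phi (y + x)) (fun y => (y + x) * phi (y + x))).
      - intros y _. unfold phi. auto_derive. auto. norm_exp (- (y + x) ^ 2 / 2). field.
      - intros y _. apply cont_der. unfold phi. auto_derive. auto. }
    split.
    - intros b _. apply ex_RInt_cont. intros; apply cont_der. unfold phi. auto_derive. auto.
    - apply is_lim_ext with (fun b => phi x - phi (b + x)). { intros; symmetry; apply R. }
      assert (H := is_lim_minus' (fun _ => phi x) (fun b => phi (b + x)) p_infty (phi x) 0
                     (is_lim_const _ _) (lim_pinf_shift _ _ _ phi_lim)).
      replace (phi x - 0) with (phi x) in H by ring. exact H. }
  eapply IG_ext; [|apply (IG_minus _ _ _ _ HA (IG_scal _ x _ (IG_shift x)))].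
  intros y _. simpl. ring.
Qed.

Lemma Gp_der (x : R) : is_derive Gp x (phi x).
Proof.
  apply (is_derive_RInt phi Gp 0 x).
  - exists (mkposreal 1 Rlt_0_1). intros y _. unfold Gp. apply (RInt_correct (V := R_CompleteNormedModule)). apply phi_ex.
  - apply phi_cont.
Qed.

Lemma IG_outer_m1 : IG (fun x => x * phi x - x ^ 2 * Tt x) (1 / 3).
Proof.
  set (P := fun x => (x ^ 2 - 1) * phi x / 3 - x ^ 3 * (sqrt (2 * PI) / 2 - Gp x) / 3).
  assert (HP : forall x, is_derive P x (x * phi x - x ^ 2 * Tt x)).
  { intros x. unfold P, Tt. assert (D := Gp_der x).
    eapply is_derive_eq. unfold phi. auto_derive.
    - repeat split; auto. eexists; exact D.
    - reflexivity.
    - replace (Derive (fun x0 : R => Gp x0) x) with (phi x) by (symmetry; apply is_derive_unique; exact D).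
      unfold phi. norm_exp (- x ^ 2 / 2). field. }
  assert (Cg : forall x, continuous (fun x => x * phi x - x ^ 2 * Tt x) x).
  { intros x. apply (continuous_minus (V := R_NormedModule)).
    apply cont_mult. apply continuous_id. apply phi_cont.
    apply cont_mult. apply cont_der; auto_derive; auto. unfold Tt.
    apply (continuous_minus (V := R_NormedModule)). apply continuous_const.
    apply cont_der. eexists; apply Gp_der. }
  assert (R : forall b, RInt (fun x => x * phi x - x ^ 2 * Tt x) 0 b = P b - P 0).
  { intros b. apply is_RInt_unique. apply (is_RInt_derive (V := R_CompleteNormedModule) P); auto. }
  assert (P0 : P 0 = - (1 / 3)).
  { unfold P, Gp. rewrite RInt_point. unfold zero; simpl. unfold phi.
    replace (- 0 ^ 2 / 2) with 0 by field. rewrite exp_0. field. }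
  split.
  - intros b _. apply ex_RInt_cont. auto.
  - apply is_lim_ext with (fun b => P b - P 0). { intros; symmetry; apply R. }
    cut (is_lim P p_infty 0).
    { intros H. assert (H2 := is_lim_minus' _ _ p_infty 0 (P 0) H (is_lim_const _ _)).
      replace (0 - P 0) with (1 / 3) in H2 by (rewrite P0; ring). exact H2. }
    apply (is_lim_le_le_loc (fun b => - (2 * (b ^ 2 * phi b) + phi b) / 3) (fun b => (b ^ 2 * phi b + phi b) / 3)).
    + exists 1. intros b Hb. destruct (Tt_bound b ltac:(lra)) as [T1 T2]. unfold P.
      assert (Pp := phi_pos b). fold (Tt b).
      assert (b ^ 3 * Tt b <= b ^ 2 * phi b).
      { replace (b ^ 2 * phi b) with (b ^ 3 * (phi b / b)) by (field; lra).
        apply Rmult_le_compat_l; auto. apply pow_le; lra. }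
      assert (0 <= b ^ 3 * Tt b) by (apply Rmult_le_pos; auto; apply pow_le; lra).
      split; nra.
    + replace (Finite 0) with (Finite (- (2 * 0 + 0) / 3)) by (f_equal; field).
      apply (is_lim_ext (fun b => / 3 * - (2 * (b ^ 2 * phi b) + phi b))). { intros; field. }
      replace (- (2 * 0 + 0) / 3) with (/ 3 * - (2 * 0 + 0)) by field.
      apply (is_lim_scal_l _ (/ 3) p_infty (- (2 * 0 + 0))).
      apply (is_lim_opp _ p_infty (2 * 0 + 0)). apply is_lim_plus'. 
      apply (is_lim_scal_l _ 2 p_infty 0). apply b2phi_lim. apply phi_lim.
    + replace (Finite 0) with (Finite ((0 + 0) / 3)) by (f_equal; field).
      apply (is_lim_ext (fun b => / 3 * (b ^ 2 * phi b + phi b))). { intros; field. }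
      replace ((0 + 0) / 3) with (/ 3 * (0 + 0)) by field.
      apply (is_lim_scal_l _ (/ 3) p_infty (0 + 0)).
      apply is_lim_plus'. apply b2phi_lim. apply phi_lim.
Qed.

Lemma J_m1_1 : J 1 (-1) = 1 / 3.
Proof.
  apply (IG2_unique (W 1 (-1))). apply J_spec; lra.
  exists (fun x => rpow x 1 * (phi x - x * Tt x)). split.
  - intros x Hx. eapply IG_ext; [|apply (IG_scal _ (rpow x 1) _ (IG_inner_m1 x))].
    intros y Hy. unfold W, Q, phi. rewrite (rpow_pos y 1 Hy), Rpower_1 by auto.
    replace (- (x ^ 2 - 2 * -1 * x * y + y ^ 2) / 2) with (- (y + x) ^ 2 / 2) by field. ring.
  - eapply IG_ext; [|apply IG_outer_m1]. intros x Hx. rewrite (rpow_pos x 1 Hx), Rpower_1 by auto. ring.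
Qed.


Definition coefE (r s c : R) : R :=
  let D := detVar s c in let t := sqrt D / s in t * t * (Rpower t (2 * r) / (2 * PI * sqrt D)).

Lemma F1_IG2 r s c : 0 < r -> 0 < s -> -1 < c < 1 -> IG2 (F1 r s c) (coefE r s c * J r c).
Proof.
  intros Hr Hs Hc. unfold coefE.
  set (D := detVar s c). set (t := sqrt D / s).
  assert (HD : 0 < D) by (apply detVar_pos; auto).
  assert (Ht : 0 < t) by (unfold t; apply Rdiv_lt_0_compat; auto; apply sqrt_lt_R0; auto).
  replace (t * t * (Rpower t (2 * r) / (2 * PI * sqrt D)) * J r c)
    with (t * t * ((Rpower t (2 * r) / (2 * PI * sqrt D)) * J r c)) by ring.
  apply IG2_scale; auto.
  eapply IG2_ext; [|apply IG2_scal; apply J_spec; lra].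
  intros x y _ _. symmetry. apply (F1_scaled r s c x y Hr Hs Hc).
Qed.

Lemma F1_R r s c : 0 < r -> 0 < s -> -1 < c < 1 -> has_integral2_R (F1 r s c) (coefE r s c * J r c).
Proof.
  intros Hr Hs Hc. apply IG2_R. apply F1_IG2; auto.
  - intros x y Hx. unfold F1. rewrite (posp_nonpos x) by lra. rewrite Rmult_0_l, rpow_nonpos by lra. ring.
  - intros x y Hy. unfold F1. rewrite (posp_nonpos y) by lra. rewrite Rmult_0_r, rpow_nonpos by lra. ring.
Qed.

Lemma K_IG2 r : 0 < r -> IG2 (K_integrand r) (J r (-1) / (2 * PI)).
Proof.
  intros Hr. replace (J r (-1) / (2 * PI)) with (/ (2 * PI) * J r (-1)) by (field; generalize PI_RGT_0; lra).
  eapply IG2_ext; [|apply IG2_scal; apply J_spec; lra].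
  intros x y _ _. unfold K_integrand, W, Q. f_equal. f_equal. f_equal. field.
Qed.

Lemma coefE_pos r s c : 0 < s -> -1 < c < 1 -> 0 < coefE r s c.
Proof.
  intros Hs Hc. unfold coefE. rewrite coef_id by auto.
  apply Rdiv_lt_0_compat. apply Rmult_lt_0_compat; apply exp_pos. generalize PI_RGT_0; lra.
Qed.

Lemma part1 r sigma : r > 0 -> sigma > 0 ->
     exists K : R,
       has_integral2_0inf (K_integrand r) K /\
       exists E : R -> R,
         (forall c, corr_domain c ->
            has_integral2_R
              (fun x y => rpow (posp x * posp y) r * gauss_density sigma c x y) (E c)) /\
         limit1_in
           (fun c => E c / (K * Rpower sigma (- 2 * (1 + r))
                             * Rpower (detVar sigma c) ((2 * r + 1) / 2)))
           corr_domain 1 (-1).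
Proof.
  intros Hr Hs. exists (J r (-1) / (2 * PI)). split.
  { apply IG2_hi. apply K_IG2; auto. }
  exists (fun c => coefE r sigma c * J r c). split.
  { intros c Hc. apply (F1_R r sigma c); auto. }
  assert (HJ := J_pos r Hr). destruct (J_close r Hr) as [C [HC0 HC]].
  assert (HPI := PI_RGT_0).
  unfold limit1_in, limit_in. intros eps Heps.
  exists (Rmin 1 (eps * J r (-1) / (C + 1))). split.
  { apply Rmin_pos. lra. apply Rdiv_lt_0_compat; [apply Rmult_lt_0_compat|]; lra. }
  intros c [Hc Hd]. simpl in *. unfold R_dist in *. unfold corr_domain in Hc.
  assert (E : coefE r sigma c * J r c / (J r (-1) / (2 * PI) * Rpower sigma (- 2 * (1 + r)) *
        Rpower (detVar sigma c) ((2 * r + 1) / 2)) = J r c / J r (-1)).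
  { unfold coefE. rewrite coef_id by auto.
    assert (0 < Rpower sigma (- 2 * (1 + r))) by apply exp_pos.
    assert (0 < Rpower (detVar sigma c) ((2 * r + 1) / 2)) by apply exp_pos.
    field. repeat split; lra. }
  rewrite E.
  replace (c - -1) with (1 + c) in Hd by ring.
  assert (Hd1 : 1 + c < 1) by (generalize (Rmin_l 1 (eps * J r (-1) / (C + 1))); apply Rabs_lt_between in Hd; lra).
  assert (Hd2 : 1 + c < eps * J r (-1) / (C + 1)) by (generalize (Rmin_r 1 (eps * J r (-1) / (C + 1))); apply Rabs_lt_between in Hd; lra).
  assert (B := HC c ltac:(lra)).
  replace (J r c / J r (-1) - 1) with ((J r c - J r (-1)) / J r (-1)) by (field; lra).
  unfold Rdiv. rewrite Rabs_mult, (Rabs_right (/ J r (-1))) by (apply Rle_ge; left; apply Rinv_0_lt_compat; auto).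
  apply Rle_lt_trans with ((1 + c) * (C + 1) * / J r (-1)).
  - apply Rmult_le_compat_r. left; apply Rinv_0_lt_compat; auto. nra.
  - apply Rmult_lt_compat_r with (r := C + 1) in Hd2; [|lra].
    unfold Rdiv in Hd2. rewrite Rmult_assoc, Rinv_l in Hd2 by lra.
    apply Rmult_lt_reg_r with (J r (-1)); auto. rewrite Rmult_assoc, Rinv_l by lra. lra.
Qed.

Lemma part2 : has_integral2_0inf (K_integrand 1) (/ (6 * PI)).
Proof.
  apply IG2_hi. replace (/ (6 * PI)) with (J 1 (-1) / (2 * PI)).
  apply K_IG2; lra. rewrite J_m1_1. field. generalize PI_RGT_0; lra.
Qed.

Lemma coef1 s c : 0 < s -> -1 < c < 1 ->
  coefE 1 s c = s ^ 2 * ((1 - c ^ 2) * sqrt (1 - c ^ 2)) / (2 * PI).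
Proof.
  intros Hs Hc. unfold coefE. rewrite coef_id by auto.
  set (d := 1 - c ^ 2). assert (Hd : 0 < d) by (unfold d; nra).
  assert (ED : detVar s c = s ^ 4 * d) by (unfold detVar, d; ring).
  rewrite ED.
  assert (Hs4 : 0 < s ^ 4) by (apply pow_lt; auto).
  replace ((2 * 1 + 1) / 2) with (1 + / 2) by field. rewrite Rpower_plus, Rpower_1, Rpower_sqrt by (apply Rmult_lt_0_compat; auto).
  replace (- 2 * (1 + 1)) with (- INR 4) by (simpl; ring). rewrite Rpower_Ropp, Rpower_pow by auto.
  rewrite sqrt_mult by lra.
  replace (s ^ 4) with (s ^ 2 * s ^ 2) by ring. rewrite sqrt_square by (apply pow2_ge_0).
  field. split. generalize PI_RGT_0; lra. lra.
Qed.

Lemma gauss_refl s c x w : gauss_density s c x (- w) = gauss_density s (- c) x w.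
Proof.
  unfold gauss_density, detVar.
  replace ((- c * s ^ 2) ^ 2) with ((c * s ^ 2) ^ 2) by ring.
  replace (s ^ 2 * x ^ 2 - 2 * c * s ^ 2 * x * - w + s ^ 2 * (- w) ^ 2)
    with (s ^ 2 * x ^ 2 - 2 * - c * s ^ 2 * x * w + s ^ 2 * w ^ 2) by ring.
  reflexivity.
Qed.

Lemma part3 sigma : sigma > 0 ->
     exists E : R -> R,
       (forall c, corr_domain c ->
          has_integral2_R (fun x y => posp x * negp y * gauss_density sigma c x y) (E c)) /\
       limit1_in (fun c => E c / (sigma ^ 2 / 2)) corr_domain 1 (-1).
Proof.
  intros Hs. exists (fun c => coefE 1 sigma (- c) * J 1 (- c)). split.
  { intros c Hc. unfold corr_domain in Hc. apply IG2_R_refl.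
    - eapply IG2_ext; [|apply (F1_IG2 1 sigma (- c)); lra].
      intros x w Hx Hw. unfold F1. rewrite gauss_refl. f_equal.
      unfold negp. rewrite Rmin_right by lra. rewrite Ropp_involutive. rewrite (posp_pos w) by auto.
      destruct (Rle_dec x 0).
      + rewrite posp_nonpos by auto. rewrite Rmult_0_l, rpow_nonpos by lra. ring.
      + rewrite posp_pos by lra. rewrite rpow_pos by nra. rewrite Rpower_1 by nra. ring.
    - intros x y Hx. rewrite (posp_nonpos x) by lra. ring.
    - intros x y Hy. unfold negp. rewrite Rmin_left by lra. ring. }
  destruct (J_close 1 Rlt_0_1) as [C [HC0 HC]].
  set (M := Rabs (J 1 (-1)) + C). assert (HM : 0 <= M) by (unfold M; generalize (Rabs_pos (J 1 (-1))); lra).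
  assert (HPI := PI_RGT_0).
  set (K := 2 * M / PI + 1). assert (HK : 0 < K) by (unfold K; assert (0 <= 2 * M / PI) by (apply Rmult_le_pos; [lra| left; apply Rinv_0_lt_compat; lra]); lra).
  unfold limit1_in, limit_in. intros eps Heps.
  exists (Rmin 1 (eps / K)). split.
  { apply Rmin_pos. lra. apply Rdiv_lt_0_compat; lra. }
  intros c [Hc Hd]. simpl in *. unfold R_dist in *. unfold corr_domain in Hc.
  replace (sigma * (sigma * 1)) with (sigma ^ 2) by ring.
  replace (c - -1) with (1 + c) in Hd by ring.
  assert (Hd1 : 1 + c < 1) by (generalize (Rmin_l 1 (eps / K)); apply Rabs_lt_between in Hd; lra).
  assert (Hd2 : 1 + c < eps / K) by (generalize (Rmin_r 1 (eps / K)); apply Rabs_lt_between in Hd; lra).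
  set (d := 1 - c ^ 2). assert (Hdp : 0 < d) by (unfold d; nra).
  assert (Hsd : 0 < sqrt d) by (apply sqrt_lt_R0; auto).
  assert (Hsd1 : sqrt d <= 1).
  { rewrite <- sqrt_1. apply sqrt_le_1_alt. unfold d; nra. }
  rewrite coef1 by lra. replace ((- c) ^ 2) with (c ^ 2) by ring. fold d.
  assert (JD := J_diff1 c Hc). fold d in JD.
  replace (J 1 (- c)) with (J 1 c - c * PI / (d * sqrt d)) by lra.
  assert (Hs2 : 0 < sigma ^ 2) by (apply pow_lt; lra).
  replace (sigma ^ 2 * (d * sqrt d) / (2 * PI) * (J 1 c - c * PI / (d * sqrt d)) / (sigma ^ 2 / 2) - 1)
    with (d * sqrt d * J 1 c / PI - (1 + c)) by (field; repeat split; nra).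
  assert (BJ : Rabs (J 1 c) <= M).
  { assert (B := HC c ltac:(lra)). unfold M.
    assert (Rabs (J 1 c) <= Rabs (J 1 (-1)) + Rabs (J 1 c - J 1 (-1))).
    { replace (J 1 c) with (J 1 (-1) + (J 1 c - J 1 (-1))) at 1 by ring. apply Rabs_triang. }
    nra. }
  assert (Hdd : d * sqrt d <= 2 * (1 + c)).
  { apply Rle_trans with (d * 1). apply Rmult_le_compat_l; lra. unfold d. nra. }
  eapply Rle_lt_trans; [apply Rabs_triang|]. rewrite Rabs_Ropp, (Rabs_right (1 + c)) by lra.
  assert (Habs : Rabs (d * sqrt d * J 1 c / PI) <= 2 * (1 + c) * M / PI).
  { unfold Rdiv. rewrite !Rabs_mult. rewrite (Rabs_right d), (Rabs_right (sqrt d)), (Rabs_right (/ PI)) by (try apply Rle_ge; try (left; apply Rinv_0_lt_compat); lra).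
    apply Rmult_le_compat_r. left; apply Rinv_0_lt_compat; lra.
    apply Rmult_le_compat; auto. apply Rmult_le_pos; lra. apply Rabs_pos. }
  apply Rle_lt_trans with ((1 + c) * K).
  - unfold K. assert (2 * (1 + c) * M / PI = (1 + c) * (2 * M / PI)) by (field; lra). lra.
  - apply Rmult_lt_compat_r with (r := K) in Hd2; auto. unfold Rdiv in Hd2. rewrite Rmult_assoc, Rinv_l in Hd2 by lra. lra.
Qed.

Theorem lemma6 :
  (forall r sigma : R, r > 0 -> sigma > 0 ->
     exists K : R,
       has_integral2_0inf (K_integrand r) K /\
       exists E : R -> R,
         (forall c, corr_domain c ->
            has_integral2_R
              (fun x y => rpow (posp x * posp y) r * gauss_density sigma c x y) (E c)) /\
         limit1_in
           (fun c => E c / (K * Rpower sigma (- 2 * (1 + r))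
                             * Rpower (detVar sigma c) ((2 * r + 1) / 2)))
           corr_domain 1 (-1)) /\
  has_integral2_0inf (K_integrand 1) (/ (6 * PI)) /\
  (forall sigma : R, sigma > 0 ->
     exists E : R -> R,
       (forall c, corr_domain c ->
          has_integral2_R (fun x y => posp x * negp y * gauss_density sigma c x y) (E c)) /\
       limit1_in (fun c => E c / (sigma ^ 2 / 2)) corr_domain 1 (-1)).
Proof.
  split; [|split].
  - intros r sigma Hr Hs. apply part1; auto.
  - apply part2.
  - intros sigma Hs. apply part3; auto.
Qed.
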